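(* For all integers $m,k,p\ge 0$, \begin{align*} &(-1)^{m+1}\sum_{i=0}^{m}\frac{(\ln 2)^i}{i!}\zeta(\bar 1,\{1\}_{m-i},p+3,\{1\}_k)+(-1)^{p+k+1}\sum_{i=0}^{k}\frac{(\ln 2)^i}{i!}\zeta(\bar 1,\{1\}_{k-i},p+3,\{1\}_m)\\ &=\frac{(-1)^m}{(m+1)!}(\ln 2)^{m+1}\zeta(\overline{p+3},\{1\}_k)+\frac{(-1)^{p+k}}{(k+1)!}(\ln 2)^{k+1}\zeta(\overline{p+3},\{1\}_m)\\ &\quad+\sum_{i=0}^{p}(-1)^i\zeta(\overline{2+i},\{1\}_m)\,\zeta(\overline{p+2-i},\{1\}_k). \end{align*}
   Context: For nonzero integers $s_1,\dots,s_k$, with $\operatorname{sgn}(s)=1$ if $s>0$ and $-1$ if $s<0$, the multiple zeta value is $\zeta(s_1,\dots,s_k)=\sum_{n_1>n_2>\cdots>n_k\ge 1}\prod_{j=1}^k n_j^{-|s_j|}\operatorname{sgn}(s_j)^{n_j}$. A barred entry $\bar q$ (e.g. $\bar 1$, $\overline{p+3}$) denotes the negative entry $-q$. The notation $\{1\}_d$ means the entry $1$ repeated $d$ times ($d=0$ means no entries). *)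

(* Defs.v *)
From Stdlib Require Import Reals ZArith List.
From Coquelicot Require Import Coquelicot.
Open Scope R_scope.

Definition mzv_term (s : Z) (n : nat) : R :=
  (if Z.ltb s 0 then -1 else 1) ^ n / (INR n) ^ (Z.abs_nat s).

(* Truncated (alternating) multiple zeta sum:
   mzv_trunc [s1;...;sk] N = sum_{N > n1 > n2 > ... > nk >= 1}
                               prod_j sgn(s_j)^{n_j} / n_j^{|s_j|}.
   mzv_trunc [] N = 1. *)
Fixpoint mzv_trunc (s : list Z) : nat -> R :=
  match s with
  | nil => fun _ => 1
  | a :: t =>
      fix go (N : nat) : R :=
        match N with
        | O => 0
        | S n => go n + (match n with
                         | O => 0
                         | _ => mzv_term a n * mzv_trunc t n
                         end)
        end
  end.

(* The multiple zeta value zeta(s1,...,sk), defined as the limit of the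
   nested partial sums over n1 < N (the standard meaning of the series,
   which converges conditionally e.g. for a leading entry bar 1). *)
Definition mzv (s : list Z) : R := real (Lim_seq (fun N => mzv_trunc s N)).

Definition ones (d : nat) : list Z := repeat 1%Z d.

(* Main.v *)
Require Import Defs.
From Stdlib Require Import Reals ZArith List Lra Lia.
From Coquelicot Require Import Coquelicot.
Open Scope R_scope.

Fixpoint sm (f : nat -> R) (N : nat) : R :=
  match N with O => 0 | S n => sm f n + f n end.

Lemma sm_ext f g N : (forall i, (i < N)%nat -> f i = g i) -> sm f N = sm g N.
Proof. induction N; simpl; intros H; auto. rewrite IHN, H; auto. Qed.

Lemma sm_plus f g N : sm (fun i => f i + g i) N = sm f N + sm g N.
Proof. induction N; simpl; [lra|rewrite IHN; lra]. Qed.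

Lemma sm_minus f g N : sm (fun i => f i - g i) N = sm f N - sm g N.
Proof. induction N; simpl; [lra|rewrite IHN; lra]. Qed.

Lemma sm_scal c f N : sm (fun i => c * f i) N = c * sm f N.
Proof. induction N; simpl; [lra|rewrite IHN; lra]. Qed.

Lemma sm_zero N : sm (fun _ => 0) N = 0.
Proof. induction N; simpl; [lra|rewrite IHN; lra]. Qed.

Lemma sm_le f g N : (forall i, (i < N)%nat -> f i <= g i) -> sm f N <= sm g N.
Proof. induction N; simpl; intros H; [lra|]. pose proof (H N ltac:(lia)). pose proof (IHN ltac:(intros; apply H; lia)). lra. Qed.

Lemma sm_abs f N : Rabs (sm f N) <= sm (fun i => Rabs (f i)) N.
Proof. induction N; simpl. rewrite Rabs_R0; lra.
 eapply Rle_trans. apply Rabs_triang. lra. Qed.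

Lemma sm_nonneg f N : (forall i, (i < N)%nat -> 0 <= f i) -> 0 <= sm f N.
Proof. intros. rewrite <- (sm_zero N). apply sm_le; auto. Qed.

Lemma sm_swap (f : nat -> nat -> R) N M :
  sm (fun i => sm (fun j => f i j) M) N = sm (fun j => sm (fun i => f i j) N) M.
Proof. induction N; simpl. rewrite sm_zero; auto. rewrite IHN, sm_plus. auto. Qed.

Lemma sm_shift f N : sm f (S N) = f O + sm (fun i => f (S i)) N.
Proof. induction N; simpl in *. lra. rewrite IHN. lra. Qed.

Lemma sm_rev f N : sm f N = sm (fun i => f (N - 1 - i)%nat) N.
Proof. induction N. auto. transitivity (sm f N + f N). reflexivity.
 rewrite sm_shift, IHN. replace (S N - 1 - 0)%nat with N by lia.
 rewrite (sm_ext (fun i => f (S N - 1 - S i)%nat) (fun i => f (N - 1 - i)%nat)) by (intros; f_equal; lia). lra. Qed.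

Lemma sum_f_R0_sm f n : sum_f_R0 f n = sm f (S n).
Proof. induction n; simpl in *. lra. rewrite IHn. auto. Qed.

Lemma sm_ind_ext g n N : (n <= N)%nat ->
  sm g n = sm (fun l => if Nat.ltb l n then g l else 0) N.
Proof. induction N; intros H.
 - replace n with O by lia. auto.
 - destruct (Nat.eq_dec n (S N)).
   + subst. apply sm_ext. intros. replace (Nat.ltb i (S N)) with true; auto. symmetry; apply Nat.ltb_lt; lia.
   + simpl. rewrite <- IHN by lia. replace (Nat.ltb N n) with false. lra. symmetry; apply Nat.ltb_ge; lia. Qed.

Lemma sm_mul_sm f g N M : sm f N * sm g M = sm (fun i => sm (fun j => f i * g j) M) N.
Proof. induction N; simpl. lra. rewrite <- IHN, sm_scal. lra. Qed.

Definition mterm (a : Z) (t : list Z) (n : nat) : R :=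
  match n with O => 0 | _ => mzv_term a n * mzv_trunc t n end.

Lemma mzv_trunc_cons a t N : mzv_trunc (a :: t) N = sm (mterm a t) N.
Proof. induction N. reflexivity.
 change (mzv_trunc (a :: t) (S N)) with (mzv_trunc (a :: t) N + mterm a t N).
 rewrite IHN. reflexivity. Qed.

Fixpoint mt (s : list Z) (l N : nat) : R :=
  match s with
  | nil => 1
  | a :: s' => sm (fun n => if Nat.ltb l n then mzv_term a n * mt s' l n else 0) N
  end.

Lemma mt0 s N : mt s 0 N = mzv_trunc s N.
Proof. revert N; induction s; intros N. reflexivity.
 simpl mt. rewrite mzv_trunc_cons. apply sm_ext. intros [|i] _; simpl. auto.
 rewrite IHs; auto. Qed.

Lemma mzv_trunc_split s a t N :
  mzv_trunc (s ++ a :: t) N = sm (fun l => mterm a t l * mt s l N) N.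
Proof. revert N; induction s as [|b s IH]; intros N.
 - simpl app. rewrite mzv_trunc_cons. apply sm_ext; intros; simpl; lra.
 - simpl app. rewrite mzv_trunc_cons. simpl mt.
   transitivity (sm (fun n => sm (fun l => if Nat.ltb l n then mzv_term b n *
       (mterm a t l * mt s l n) else 0) N) N).
   + apply sm_ext. intros [|n] Hn.
     * simpl. rewrite sm_zero. auto.
     * unfold mterm at 1. rewrite IH. rewrite (sm_ind_ext _ (S n) N) by lia.
       rewrite <- sm_scal. apply sm_ext. intros l _. destruct (Nat.ltb l (S n)); lra.
   + rewrite sm_swap. apply sm_ext. intros l _. rewrite <- sm_scal. apply sm_ext.
     intros n _. destruct (Nat.ltb l n); lra.
Qed.


Lemma mzv_term_pos q n : (0 < q)%nat -> mzv_term (Z.of_nat q) n = / INR n ^ q.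
Proof. intros. unfold mzv_term. replace (Z.ltb (Z.of_nat q) 0) with false.
 rewrite Zabs2Nat.id, pow1. unfold Rdiv; ring. symmetry; apply Z.ltb_ge; lia. Qed.

Lemma mzv_term_neg q n : (0 < q)%nat -> mzv_term (- Z.of_nat q) n = (-1) ^ n / INR n ^ q.
Proof. intros. unfold mzv_term. replace (Z.ltb (- Z.of_nat q) 0) with true.
 replace (Z.abs_nat (- Z.of_nat q)) with q. auto.
 apply Nat2Z.inj; rewrite Nat2Z.inj_abs_nat; lia. symmetry; apply Z.ltb_lt; lia. Qed.

Definition e (m n : nat) : R := mzv_trunc (ones m) n.

Lemma e_0 n : e 0 n = 1. Proof. reflexivity. Qed.

Lemma e_S m n : e (S m) (S n) = e (S m) n + (if Nat.eqb n 0 then 0 else e m n / INR n).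
Proof. unfold e. change (ones (S m)) with (1%Z :: ones m). rewrite !mzv_trunc_cons.
 simpl sm at 1. f_equal. destruct n. reflexivity. simpl Nat.eqb. unfold mterm.
 change 1%Z with (Z.of_nat 1). rewrite mzv_term_pos by lia. rewrite pow_1. unfold Rdiv. ring. Qed.

Lemma e_S0 m : e (S m) 0 = 0. Proof. reflexivity. Qed.
Lemma e_S1 m : e (S m) 1 = 0. Proof. rewrite e_S. simpl. rewrite e_S0. lra. Qed.

Lemma e_nonneg m n : 0 <= e m n.
Proof. revert n; induction m; intros n. rewrite e_0; lra.
 induction n. rewrite e_S0; lra. rewrite e_S. destruct (Nat.eqb n 0). lra.
 assert (0 <= e m n / INR n). { destruct n. simpl. unfold Rdiv; rewrite Rinv_0; lra.
   apply Rdiv_le_0_compat; auto. apply lt_0_INR; lia. } lra. Qed.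

Fixpoint bb (n : nat) : R :=
  match n with O => 1 | S n' => bb n' * (if Nat.eqb n' 0 then 1 else (2 * INR n' + 1) / (2 * INR n')) end.

Lemma bb_ge1 n : 1 <= bb n.
Proof. induction n. simpl; lra. simpl bb. destruct (Nat.eqb n 0) eqn:E. lra.
 apply Nat.eqb_neq in E. assert (0 < INR n) by (apply lt_0_INR; lia).
 assert (1 <= (2 * INR n + 1) / (2 * INR n)). { apply Rcomplements.Rle_div_r; lra. } nra. Qed.

Lemma bb_S n : (1 <= n)%nat -> bb (S n) = bb n * (2 * INR n + 1) / (2 * INR n).
Proof. intros. simpl bb. replace (Nat.eqb n 0) with false. unfold Rdiv; ring.
 symmetry; apply Nat.eqb_neq; lia. Qed.

Lemma e_bound m n : e m n <= 2 ^ m * bb n.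
Proof. revert m; induction n; intros m.
 - destruct m. rewrite e_0; simpl; lra. rewrite e_S0. pose proof (bb_ge1 0). pose proof (pow_lt 2 (S m) ltac:(lra)). nra.
 - destruct m. rewrite e_0. pose proof (bb_ge1 (S n)). rewrite pow_O; lra.
   rewrite e_S. destruct (Nat.eqb n 0) eqn:E.
   + apply Nat.eqb_eq in E; subst. rewrite e_S0. simpl bb. pose proof (pow_lt 2 (S m) ltac:(lra)). lra.
   + apply Nat.eqb_neq in E. rewrite bb_S by lia. assert (0 < INR n) by (apply lt_0_INR; lia).
     pose proof (IHn (S m)). pose proof (IHn m).
     assert (e m n / INR n <= 2 ^ m * bb n / INR n) by (apply Rmult_le_compat_r; [apply Rlt_le, Rinv_0_lt_compat; lra|lra]).
     replace (2 ^ S m * (bb n * (2 * INR n + 1) / (2 * INR n))) with (2 ^ S m * bb n + 2 ^ m * bb n / INR n).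
     lra. simpl. field. lra. Qed.

Lemma bb_sq n : bb (S n) ^ 2 <= 2 * INR n + 1.
Proof. induction n. simpl; lra.
 rewrite bb_S by lia. rewrite S_INR. assert (0 < INR n + 1) by (pose proof (pos_INR n); lra).
 replace ((bb (S n) * (2 * (INR n + 1) + 1) / (2 * (INR n + 1))) ^ 2) with
   (bb (S n) ^ 2 * ((2 * INR n + 3)^2 / (4 * (INR n + 1)^2))) by (field; lra).
 assert (0 <= (2 * INR n + 3)^2 / (4 * (INR n + 1)^2)) by (apply Rdiv_le_0_compat; nra).
 apply Rle_trans with ((2 * INR n + 1) * ((2 * INR n + 3)^2 / (4 * (INR n + 1)^2))).
 apply Rmult_le_compat_r; lra.
 replace ((2 * INR n + 1) * ((2 * INR n + 3) ^ 2 / (4 * (INR n + 1) ^ 2))) with ((2 * INR n + 1) * (2 * INR n + 3) ^ 2 / (4 * (INR n + 1) ^ 2)) by (field; lra).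
 apply Rcomplements.Rle_div_l. nra. nra. Qed.

Definition cc (n : nat) : R := 4 * bb n / INR n.

Lemma cc_nonneg n : 0 <= cc n.
Proof. unfold cc. destruct n. simpl. unfold Rdiv; rewrite Rinv_0; lra.
 pose proof (bb_ge1 (S n)). apply Rdiv_le_0_compat. lra. apply lt_0_INR; lia. Qed.

Lemma cc_diff n : (1 <= n)%nat -> bb n / INR n ^ 2 <= cc n - cc (S n).
Proof. intros. unfold cc. rewrite bb_S by lia. rewrite S_INR. assert (1 <= INR n) by (apply (le_INR 1); lia).
 pose proof (bb_ge1 n).
 replace (4 * bb n / INR n - 4 * (bb n * (2 * INR n + 1) / (2 * INR n)) / (INR n + 1)) with
   (2 * bb n / (INR n * (INR n + 1))) by (field; lra).
 assert (E1 : 2 / (INR n * (INR n + 1)) - / INR n ^ 2 = (INR n - 1) / (INR n ^ 2 * (INR n + 1))) by (field; lra).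
 assert (0 <= (INR n - 1) / (INR n ^ 2 * (INR n + 1))) by (apply Rdiv_le_0_compat; nra).
 replace (2 * bb n / (INR n * (INR n + 1))) with (bb n * (2 / (INR n * (INR n + 1)))) by (field; lra).
 unfold Rdiv at 1. apply Rmult_le_compat_l; lra. Qed.

Lemma cc_sq n : (1 <= n)%nat -> cc n ^ 2 <= 48 / INR n.
Proof. intros. unfold cc. destruct n. lia. pose proof (bb_sq n). rewrite S_INR in *.
 assert (1 <= INR n + 1) by (pose proof (pos_INR n); lra).
 replace ((4 * bb (S n) / (INR n + 1)) ^ 2) with (16 * bb (S n) ^ 2 / (INR n + 1)^2) by (field; lra).
 apply Rcomplements.Rle_div_l. nra.
 replace (48 / (INR n + 1) * (INR n + 1) ^ 2) with (48 * (INR n + 1)) by (field; lra). nra. Qed.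

Lemma lim_sq_bound (u : nat -> R) K : (forall n, (1 <= n)%nat -> 0 <= u n /\ u n ^ 2 <= K / INR n) ->
  is_lim_seq u 0.
Proof. intros H. apply is_lim_seq_spec. intros eps.
 assert (Hk : 0 <= K). { destruct (H 1%nat ltac:(lia)) as [_ H1]. simpl in H1. nra. }
 destruct (nfloor_ex (K / (eps * eps))) as [N HN]. apply Rdiv_le_0_compat. auto. pose proof (cond_pos eps); nra.
 exists (S N). intros n Hn. destruct (H n ltac:(lia)) as [H1 H2]. rewrite Rminus_0_r, Rabs_pos_eq by auto.
 pose proof (cond_pos eps). assert (INR n >= INR N + 1). { rewrite <- S_INR. apply Rle_ge, le_INR. lia. }
 assert (K / INR n < eps * eps). { apply Rcomplements.Rlt_div_l. pose proof (pos_INR N); lra.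
   assert (H4 : K / (eps*eps) < INR n) by lra. apply (proj1 (Rcomplements.Rlt_div_l K (INR n) (eps*eps) ltac:(nra))) in H4; nra. }
 nra. Qed.

Lemma cc_lim : is_lim_seq cc 0.
Proof. apply (lim_sq_bound _ 48). intros; split. apply cc_nonneg. apply cc_sq; auto. Qed.

Lemma conv_G (u : nat -> R) K : 0 <= K ->
  (forall n, (1 <= n)%nat -> Rabs (u (S n) - u n) <= K * (bb n / INR n ^ 2)) ->
  exists L : R, is_lim_seq u L /\ forall n, (1 <= n)%nat -> Rabs (L - u n) <= K * cc n.
Proof. intros HK H.
 assert (D : forall n d, (1 <= n)%nat -> Rabs (u (d + n)%nat - u n) <= K * (cc n - cc (d + n)%nat)).
 { intros n d Hn. induction d. simpl. rewrite Rminus_eq_0, Rabs_R0; lra.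
   replace (u (S d + n)%nat - u n) with ((u (S (d + n)) - u (d + n)%nat) + (u (d+n)%nat - u n)) by (simpl; ring).
   eapply Rle_trans. apply Rabs_triang. pose proof (H (d+n)%nat ltac:(lia)).
   pose proof (cc_diff (d+n) ltac:(lia)). change (S d + n)%nat with (S (d + n)). assert (K * (bb (d + n) / INR (d + n) ^ 2) <= K * (cc (d + n) - cc (S (d + n)))) by (apply Rmult_le_compat_l; lra). lra. }
 assert (D2 : forall n d, (1 <= n)%nat -> Rabs (u (d + n)%nat - u n) <= K * cc n).
 { intros. pose proof (D n d H0). pose proof (cc_nonneg (d+n)). nra. }
 assert (Hc : ex_finite_lim_seq u).
 { apply ex_lim_seq_cauchy_corr. intros eps.
   pose proof (is_lim_seq_scal_l _ K _ cc_lim) as HL. simpl in HL. rewrite Rmult_0_r in HL.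
   apply is_lim_seq_spec in HL. destruct (HL (pos_div_2 eps)) as [N HN].
   exists (S N). intros n m Hn Hm. pose proof (HN (S N) ltac:(lia)). simpl in H0.
   rewrite Rminus_0_r in H0. pose proof (Rle_abs (K * cc (S N))).
   pose proof (D2 (S N) (n - S N)%nat ltac:(lia)). pose proof (D2 (S N) (m - S N)%nat ltac:(lia)).
   replace (n - S N + S N)%nat with n in * by lia. replace (m - S N + S N)%nat with m in * by lia.
   replace (u n - u m) with ((u n - u (S N)) - (u m - u (S N))) by ring.
   eapply Rle_lt_trans. apply Rabs_triang. rewrite Rabs_Ropp. lra. }
 destruct Hc as [L HL]. exists L. split; auto. intros n Hn.
 assert (H1 : is_lim_seq (fun d => Rabs (u (d + n)%nat - u n)) (Rabs (L - u n))).
 { apply (is_lim_seq_abs _ (L - u n)). apply is_lim_seq_minus'. apply (is_lim_seq_incr_n u n L) in HL. auto.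
   apply is_lim_seq_const. }
 pose proof (is_lim_seq_le _ _ _ _ (fun d => D2 n d Hn) H1 (is_lim_seq_const _)). simpl in H0. auto. Qed.

Lemma mzv_term_m1 n : mzv_term (-1)%Z n = (-1) ^ n / INR n.
Proof. unfold mzv_term. simpl Z.ltb. cbv iota. simpl Z.abs_nat. rewrite pow_1. auto. Qed.

Lemma mzv_term_1 n : mzv_term 1%Z n = / INR n.
Proof. unfold mzv_term. simpl Z.ltb. cbv iota. simpl Z.abs_nat. rewrite pow_1, pow1. unfold Rdiv; ring. Qed.


Definition Pj (j N : nat) (v : R) : R :=
  sm (fun n => if Nat.eqb n 0 then 0 else (-1) ^ n * e j n * v ^ n / INR n) N.
Definition Dj (j N : nat) (v : R) : R :=
  sm (fun n => if Nat.eqb n 0 then 0 else (-1) ^ n * e j n * v ^ (n - 1)) N.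
Definition Lam (j : nat) (v : R) : R := (-1) ^ j * ln (1 + v) ^ j / INR (fact j).
Definition Xj (j N : nat) (v : R) : R := match j with O => 1 | S j' => Pj j' N v end.

Lemma is_derive_sm (f : nat -> R -> R) (df : nat -> R -> R) N v :
  (forall n, is_derive (f n) v (df n v)) ->
  is_derive (fun x => sm (fun n => f n x) N) v (sm (fun n => df n v) N).
Proof. intros H. induction N; simpl.
 - apply (is_derive_const 0 v).
 - apply (is_derive_plus (fun x => sm (fun n => f n x) N) (f N) v); auto. Qed.

Lemma Pj_derive j N v : is_derive (Pj j N) v (Dj j N v).
Proof. unfold Pj, Dj. apply (is_derive_sm (fun n x => if Nat.eqb n 0 then 0 else (-1) ^ n * e j n * x ^ n / INR n)
   (fun n x => if Nat.eqb n 0 then 0 else (-1) ^ n * e j n * x ^ (n - 1))).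
 intros n. destruct (Nat.eqb n 0) eqn:E. apply (is_derive_const 0 v).
 apply Nat.eqb_neq in E. auto_derive. auto.
 assert (INR n <> 0) by (apply not_0_INR; auto). replace (pred n) with (n - 1)%nat by lia. field. auto. Qed.

Lemma Dj_id j N v : (1 + v) * Dj j (S N) v = - Xj j N v + (-1) ^ N * e j N * v ^ N.
Proof. induction N.
 - unfold Dj. simpl. destruct j; simpl. rewrite e_0. ring. unfold Pj. simpl. rewrite e_S0. ring.
 - unfold Dj in *. change (sm ?f (S (S N))) with (sm f (S N) + f (S N)).
   rewrite Rmult_plus_distr_l, IHN. simpl Nat.eqb. replace (S N - 1)%nat with N by lia.
   destruct j.
   + simpl Xj. rewrite !e_0. simpl pow. ring.
   + simpl Xj. unfold Pj. change (sm ?f (S N)) with (sm f N + f N). rewrite e_S.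
     destruct (Nat.eqb N 0) eqn:E. apply Nat.eqb_eq in E; subst. simpl. rewrite e_S0. ring.
     apply Nat.eqb_neq in E. assert (INR N <> 0) by (apply not_0_INR; auto). simpl pow. field. auto. Qed.

Lemma Lam_derive j v : -1 < v -> is_derive (Lam (S j)) v (- Lam j v / (1 + v)).
Proof. intros Hv. unfold Lam. auto_derive. lra.
 change (fact j + j * fact j)%nat with (S j * fact j)%nat. rewrite mult_INR.
 change (match j with | 0%nat => 1 | S _ => INR j + 1 end) with (INR (S j)).
 pose proof (INR_fact_neq_0 j). assert (INR (S j) <> 0) by (apply not_0_INR; lia).
 field. repeat split; auto; lra. Qed.

Lemma mono_bound (F G dF dG : R -> R) :
  (forall v, 0 <= v <= 1 -> is_derive F v (dF v)) ->
  (forall v, 0 <= v <= 1 -> is_derive G v (dG v)) ->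
  F 0 = 0 -> G 0 = 0 -> (forall v, 0 <= v <= 1 -> Rabs (dF v) <= dG v) ->
  forall v, 0 <= v <= 1 -> Rabs (F v) <= G v.
Proof. intros HF HG F0 G0 Hd v Hv.
 destruct (Req_dec v 0). subst. rewrite F0, G0, Rabs_R0. lra.
 assert (M : forall s : R, (s = 1 \/ s = -1) -> 0 <= G v - s * F v).
 { intros s Hs. destruct (MVT_gen (fun x => G x - s * F x) 0 v (fun x => dG x - s * dF x)) as [c [Hc Hm]].
   - intros x Hx. rewrite Rmin_left, Rmax_right in Hx by lra.
     apply (is_derive_minus G (fun x => s * F x) x). apply HG; lra. apply is_derive_scal. apply HF; lra.
   - intros x Hx. rewrite Rmin_left, Rmax_right in Hx by lra. apply continuity_pt_filterlim.
     apply (ex_derive_continuous (fun x => G x - s * F x)). eexists.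
     apply (is_derive_minus G (fun x => s * F x) x). apply HG; lra. apply is_derive_scal. apply HF; lra.
   - rewrite Rmin_left, Rmax_right in Hc by lra. rewrite F0, G0 in Hm.
     pose proof (Hd c ltac:(lra)). apply Rabs_le_between in H0.
     assert (0 <= dG c - s * dF c) by (destruct Hs; subst; lra). nra. }
 pose proof (M 1 (or_introl eq_refl)). pose proof (M (-1) (or_intror eq_refl)).
 apply Rabs_le; lra. Qed.

Lemma pow_le1 x k : 0 <= x <= 1 -> 0 <= x ^ k <= 1.
Proof. intros H; induction k; simpl; nra. Qed.

Lemma ln2_lt1 : ln 2 < 1.
Proof. rewrite <- ln_exp with 1. apply ln_increasing. lra. pose proof (exp_ineq1 1); lra. Qed.

Lemma Lam_bound j v : 0 <= v <= 1 -> Rabs (Lam j v) <= 1.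
Proof. intros Hv. unfold Lam. assert (0 <= ln (1 + v) <= 1).
 { split. rewrite <- ln_1. apply ln_le; lra. pose proof ln2_lt1. assert (ln (1 + v) <= ln 2) by (apply ln_le; lra). lra. }
 pose proof (pow_le1 _ j H). assert (1 <= INR (fact j)) by (apply (le_INR 1); pose proof (lt_O_fact j); lia).
 unfold Rdiv. rewrite !Rabs_mult, pow_1_abs, Rabs_pos_eq by lra. rewrite Rabs_inv, Rabs_pos_eq by lra.
 assert (/ INR (fact j) <= 1) by (rewrite <- Rinv_1; apply Rinv_le_contravar; lra).
 assert (0 <= / INR (fact j)) by (apply Rlt_le, Rinv_0_lt_compat; lra). nra. Qed.

Lemma bb_incr n : bb n <= bb (S n).
Proof. simpl bb at 2. pose proof (bb_ge1 n). destruct (Nat.eqb n 0) eqn:E. lra.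
 apply Nat.eqb_neq in E. assert (0 < INR n) by (apply lt_0_INR; lia).
 assert (1 <= (2 * INR n + 1) / (2 * INR n)) by (apply Rcomplements.Rle_div_r; lra). nra. Qed.

Lemma e_over_lim j : is_lim_seq (fun N => e j N / INR (S N)) 0.
Proof. apply (is_lim_seq_le_le (fun _ => 0) _ (fun N => 2 ^ j / 4 * cc (S N))).
 - intros N. split. apply Rdiv_le_0_compat. apply e_nonneg. apply lt_0_INR; lia.
   unfold cc. pose proof (e_bound j N). pose proof (bb_incr N). pose proof (pow_lt 2 j ltac:(lra)).
   assert (0 < INR (S N)) by (apply lt_0_INR; lia).
   replace (2 ^ j / 4 * (4 * bb (S N) / INR (S N))) with (2 ^ j * bb (S N) / INR (S N)) by (field; lra).
   apply Rmult_le_compat_r. apply Rlt_le, Rinv_0_lt_compat; lra. nra.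
 - apply is_lim_seq_const.
 - replace (Finite 0) with (Rbar_mult (2 ^ j / 4) 0) by (simpl; f_equal; ring).
   apply is_lim_seq_scal_l. apply (is_lim_seq_incr_1 cc 0). apply cc_lim. Qed.

Lemma Pj_0 j N : Pj j N 0 = 0.
Proof. unfold Pj. transitivity (sm (fun _ => 0) N). apply sm_ext. intros [|n] _. auto. simpl Nat.eqb. cbv iota. rewrite pow_i by lia. unfold Rdiv; ring. apply sm_zero. Qed.

Lemma Xj_approx j : exists d : nat -> R, is_lim_seq d 0 /\
  forall N v, 0 <= v <= 1 -> Rabs (Xj j N v - Lam j v) <= d N.
Proof. induction j.
 - exists (fun _ => 0). split. apply is_lim_seq_const. intros. unfold Xj, Lam. simpl. 
   replace (1 - 1 * 1 / 1) with 0 by field. rewrite Rabs_R0; lra.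
 - destruct IHj as [d [Hd Hb]].
   exists (fun N => match N with O => 1 | S N' => d N' + e j N' / INR (S N') end). split.
   + apply is_lim_seq_incr_1. replace (Finite 0) with (Rbar_plus 0 0) by (simpl; f_equal; ring).
     apply is_lim_seq_plus'. auto. apply e_over_lim. 
   + intros [|N] v Hv.
     * simpl Xj. unfold Pj. simpl sm. rewrite Rminus_0_l, Rabs_Ropp. apply Lam_bound; auto.
     * simpl Xj.
       pose proof (mono_bound (fun x => Pj j (S N) x - Lam (S j) x)
         (fun x => d N * x + e j N * x ^ (S N) / INR (S N))
         (fun x => Dj j (S N) x - (- Lam j x / (1 + x)))
         (fun x => d N + e j N * x ^ N)) as HM.
       assert (INR (S N) <> 0) by (apply not_0_INR; lia).
       assert (Hm : Rabs (Pj j (S N) v - Lam (S j) v) <= d N * v + e j N * v ^ (S N) / INR (S N)).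
       2:{ pose proof (pow_le1 v (S N) Hv). pose proof (e_nonneg j N).
          assert (0 <= d N). { pose proof (Hb N 0 ltac:(lra)). pose proof (Rabs_pos (Xj j N 0 - Lam j 0)). lra. }
          assert (e j N * v ^ S N / INR (S N) <= e j N / INR (S N)).
          { unfold Rdiv. apply Rmult_le_compat_r. apply Rlt_le, Rinv_0_lt_compat, lt_0_INR; lia. nra. }
          nra. }
       apply HM; [ | | | | | exact Hv].
       -- intros x Hx. apply (is_derive_minus (Pj j (S N)) (Lam (S j))). apply Pj_derive. apply Lam_derive; lra.
       -- intros x Hx. auto_derive. auto. change (match N with 0%nat => 1 | S _ => INR N + 1 end) with (INR (S N)). field. auto.
       -- rewrite Pj_0. unfold Lam. rewrite Rplus_0_r, ln_1, pow_i by lia. unfold Rdiv. ring.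
       -- cbv beta. rewrite pow_i by lia. unfold Rdiv; ring.
       -- intros x Hx. pose proof (Dj_id j N x). pose proof (Hb N x Hx). simpl Xj in *.
          assert (HD : Dj j (S N) x = (- Xj j N x + (-1)^N * e j N * x^N)/(1+x)) by (rewrite <- H0; field; lra).
          rewrite HD. replace ((- Xj j N x + (-1)^N * e j N * x^N)/(1+x) - - Lam j x / (1 + x)) with
            ((- (Xj j N x - Lam j x) + (-1) ^ N * e j N * x ^ N) / (1 + x)) by (field; lra).
          unfold Rdiv. rewrite Rabs_mult. rewrite Rabs_inv, (Rabs_pos_eq (1 + x)) by lra.
          assert (Rabs (- (Xj j N x - Lam j x) + (-1) ^ N * e j N * x ^ N) <= d N + e j N * x ^ N).
          { eapply Rle_trans. apply Rabs_triang. rewrite Rabs_Ropp, !Rabs_mult, pow_1_abs.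
            rewrite (Rabs_pos_eq (e j N)) by apply e_nonneg. rewrite (Rabs_pos_eq (x ^ N)) by (apply pow_le; lra). lra. }
          assert (0 <= Rabs (- (Xj j N x - Lam j x) + (-1) ^ N * e j N * x ^ N)) by apply Rabs_pos.
          assert (/ (1 + x) <= 1) by (rewrite <- Rinv_1; apply Rinv_le_contravar; lra).
          assert (0 < / (1 + x)) by (apply Rinv_0_lt_compat; lra).
          pose proof (e_nonneg j N). pose proof (pow_le x N ltac:(lra)). nra.
Qed.

Lemma L1 j : is_lim_seq (fun N => mzv_trunc ((-1)%Z :: ones j) N)
   ((-1) ^ S j * ln 2 ^ S j / INR (fact (S j))).
Proof. destruct (Xj_approx (S j)) as [d [Hd Hb]].
 replace ((-1) ^ S j * ln 2 ^ S j / INR (fact (S j))) with (Lam (S j) 1) by (unfold Lam; do 3 f_equal; ring).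
 apply is_lim_seq_spec. intros eps. apply is_lim_seq_spec in Hd. destruct (Hd eps) as [N HN].
 exists N. intros n Hn. pose proof (HN n Hn). pose proof (Hb n 1 ltac:(lra)). simpl Xj in H0.
 rewrite Rminus_0_r in H. pose proof (Rle_abs (d n)).
 replace (mzv_trunc ((-1)%Z :: ones j) n) with (Pj j n 1). lra.
 rewrite mzv_trunc_cons. unfold Pj. apply sm_ext. intros [|i] _. auto. simpl Nat.eqb. unfold mterm.
 rewrite mzv_term_m1, pow1. fold (e j (S i)). field.
  apply not_0_INR; lia. Qed.


Lemma Pj_lim m : is_lim_seq (fun N => Pj m N 1) (Lam (S m) 1).
Proof. destruct (Xj_approx (S m)) as [d [Hd Hb]].
 apply is_lim_seq_spec. intros eps. apply is_lim_seq_spec in Hd. destruct (Hd eps) as [N HN].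
 exists N. intros n Hn. pose proof (HN n Hn). pose proof (Hb n 1 ltac:(lra)). simpl Xj in H0.
 rewrite Rminus_0_r in H. pose proof (Rle_abs (d n)). lra. Qed.

Definition qterm (m l n : nat) : R :=
  if Nat.eqb n 0 then 0 else INR l * (-1) ^ n * e m n / (INR n * (INR n + INR l)).
Definition Qn (m l N : nat) : R := sm (qterm m l) N.

Lemma Qn_rec m l N :
  Qn m (S l) (S N) + Qn m l (S N) = 2 * Pj m (S N) 1 + (if Nat.eqb m 0 then 1 / INR (S l) else 0)
   + (match m with O => 0 | S m' => Qn m' (S l) N / INR (S l) end)
   - (-1) ^ N * e m N / (INR N + 1 + INR l).
Proof. assert (Hl : 0 < INR (S l)) by (apply lt_0_INR; lia). rewrite S_INR in *.
 pose proof (pos_INR l). induction N.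
 - unfold Qn, Pj, qterm. simpl sm. destruct m. rewrite e_0. simpl. field. lra.
   rewrite e_S0. simpl. field. lra.
 - unfold Qn, Pj in *. change (sm ?f (S (S N))) with (sm f (S N) + f (S N)).
   replace (sm (qterm m (S l)) (S N) + qterm m (S l) (S N) + (sm (qterm m l) (S N) + qterm m l (S N)))
     with ((sm (qterm m (S l)) (S N) + sm (qterm m l) (S N)) + (qterm m (S l) (S N) + qterm m l (S N))) by ring.
   rewrite IHN. clear IHN. unfold qterm. simpl Nat.eqb. cbv iota. rewrite !S_INR. pose proof (pos_INR N).
   destruct m.
   + rewrite !e_0. simpl Nat.eqb. cbv iota. simpl pow. rewrite !pow1. field. repeat split; lra.
   + rewrite e_S. change (sm ?f (S N)) with (sm f N + f N). cbv beta.
     destruct (Nat.eqb N 0) eqn:E.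
     * apply Nat.eqb_eq in E; subst. simpl. rewrite e_S0. field. repeat split; lra.
     * apply Nat.eqb_neq in E. assert (0 < INR N) by (apply lt_0_INR; lia).
       simpl pow. rewrite !pow1. field. repeat split; lra. Qed.

Lemma qterm_bound m l n : (1 <= n)%nat -> Rabs (qterm m l n) <= INR l * 2 ^ m * (bb n / INR n ^ 2).
Proof. intros Hn. unfold qterm. destruct (Nat.eqb n 0) eqn:E. apply Nat.eqb_eq in E; lia.
 assert (0 < INR n) by (apply lt_0_INR; lia). pose proof (pos_INR l). pose proof (e_nonneg m n).
 pose proof (e_bound m n).
 replace (INR l * (-1) ^ n * e m n / (INR n * (INR n + INR l))) with
   ((-1) ^ n * ((INR l * e m n / INR n ^ 2) * (INR n / (INR n + INR l)))) by (field; lra).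
 rewrite Rabs_mult, pow_1_abs, Rmult_1_l. rewrite Rabs_pos_eq.
 2:{ apply Rmult_le_pos. apply Rdiv_le_0_compat; nra. apply Rdiv_le_0_compat; nra. }
 assert (INR n / (INR n + INR l) <= 1) by (apply Rcomplements.Rle_div_l; nra).
 assert (0 <= INR n / (INR n + INR l)) by (apply Rdiv_le_0_compat; nra).
 assert (INR l * e m n / INR n ^ 2 <= INR l * 2 ^ m * (bb n / INR n ^ 2)).
 { replace (INR l * 2 ^ m * (bb n / INR n ^ 2)) with (INR l * (2 ^ m * bb n) / INR n ^ 2) by (field; lra).
   apply Rmult_le_compat_r. apply Rlt_le, Rinv_0_lt_compat; nra. apply Rmult_le_compat_l; auto. }
 assert (0 <= INR l * e m n / INR n ^ 2) by (apply Rdiv_le_0_compat; nra). nra. Qed.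

Lemma Qn_conv m l : exists L : R, is_lim_seq (Qn m l) L /\
  forall n, (1 <= n)%nat -> Rabs (L - Qn m l n) <= INR l * 2 ^ m * cc n.
Proof. apply conv_G. pose proof (pos_INR l). pose proof (pow_le 2 m ltac:(lra)). nra.
 intros n Hn. unfold Qn. simpl sm.
 replace (sm (qterm m l) n + qterm m l n - sm (qterm m l) n) with (qterm m l n) by ring.
 apply qterm_bound; auto. Qed.

Definition QQ (m l : nat) : R := real (Lim_seq (Qn m l)).

Lemma QQ_lim m l : is_lim_seq (Qn m l) (QQ m l).
Proof. destruct (Qn_conv m l) as [L [HL _]]. unfold QQ. rewrite (is_lim_seq_unique _ _ HL). simpl. exact HL. Qed.

Lemma QQ_bound m l n : (1 <= n)%nat -> Rabs (QQ m l - Qn m l n) <= INR l * 2 ^ m * cc n.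
Proof. destruct (Qn_conv m l) as [L [HL HB]]. unfold QQ. rewrite (is_lim_seq_unique _ _ HL). auto. Qed.

Lemma QQ_0 m : QQ m 0 = 0.
Proof. unfold QQ. rewrite (is_lim_seq_unique _ 0). auto.
 apply is_lim_seq_ext with (fun _ => 0). intros N. unfold Qn. symmetry. transitivity (sm (fun _ => 0) N).
 apply sm_ext. intros i _. unfold qterm. destruct (Nat.eqb i 0). auto. simpl. unfold Rdiv. ring. apply sm_zero.
 apply is_lim_seq_const. Qed.

Lemma QQ_rec m l :
  QQ m (S l) + QQ m l = 2 * Lam (S m) 1 + (if Nat.eqb m 0 then 1 / INR (S l) else 0)
   + (match m with O => 0 | S m' => QQ m' (S l) / INR (S l) end).
Proof.
 assert (H1 : is_lim_seq (fun N => Qn m (S l) (S N) + Qn m l (S N)) (QQ m (S l) + QQ m l)).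
 { apply is_lim_seq_plus'; apply (is_lim_seq_incr_1 (Qn _ _)); apply QQ_lim. }
 assert (H2 : is_lim_seq (fun N => 2 * Pj m (S N) 1 + (if Nat.eqb m 0 then 1 / INR (S l) else 0)
   + (match m with O => 0 | S m' => Qn m' (S l) N / INR (S l) end)
   - (-1) ^ N * e m N / (INR N + 1 + INR l))
   (2 * Lam (S m) 1 + (if Nat.eqb m 0 then 1 / INR (S l) else 0)
   + (match m with O => 0 | S m' => QQ m' (S l) / INR (S l) end) - 0)).
 { apply is_lim_seq_minus'. apply is_lim_seq_plus'. apply is_lim_seq_plus'.
   apply (is_lim_seq_scal_l _ 2 (Lam (S m) 1)). apply (is_lim_seq_incr_1 (fun N => Pj m N 1)). apply Pj_lim.
   apply is_lim_seq_const. destruct m. apply is_lim_seq_const.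
   apply (is_lim_seq_scal_r _ (/ INR (S l)) (QQ m (S l))). apply QQ_lim.
   apply is_lim_seq_abs_0. apply (is_lim_seq_le_le (fun _ => 0) _ (fun N => e m N / INR (S N))).
   intros N. split. apply Rabs_pos. unfold Rdiv. rewrite !Rabs_mult, pow_1_abs, Rmult_1_l.
   rewrite Rabs_pos_eq by apply e_nonneg. rewrite S_INR. pose proof (pos_INR N). pose proof (pos_INR l).
   rewrite Rabs_inv, Rabs_pos_eq by lra. apply Rmult_le_compat_l. apply e_nonneg.
   apply Rinv_le_contravar; lra. apply is_lim_seq_const. apply e_over_lim. }
 rewrite Rminus_0_r in H2. apply (is_lim_seq_ext _ _ _ (fun N => Qn_rec m l N)) in H1.
 apply is_lim_seq_unique in H1. apply is_lim_seq_unique in H2.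
 rewrite H1 in H2. injection H2. auto. Qed.


Lemma sm_single (f : nat -> R) a N :
  sm (fun n => if Nat.eqb n a then f n else 0) N = if Nat.ltb a N then f a else 0.
Proof. induction N; simpl. auto. rewrite IHN.
 destruct (Nat.eqb_spec N a); destruct (Nat.ltb_spec a N); destruct (Nat.ltb_spec a (S N)); subst; try lia; lra. Qed.

Lemma mt_ones_diag j l : mt (ones (S j)) l (S l) = 0.
Proof. change (mt (ones (S j)) l (S l)) with (sm (fun n => if Nat.ltb l n then mzv_term 1%Z n * mt (ones j) l n else 0) (S l)).
 transitivity (sm (fun _ => 0) (S l)).
 apply sm_ext. intros n Hn. replace (Nat.ltb l n) with false. auto. symmetry; apply Nat.ltb_ge; lia.
 apply sm_zero. Qed.

Lemma ltb_split l n : Nat.ltb l n = orb (Nat.eqb n (S l)) (Nat.ltb (S l) n).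
Proof. destruct (Nat.ltb_spec l n); destruct (Nat.eqb_spec n (S l)); destruct (Nat.ltb_spec (S l) n); simpl; auto; lia. Qed.

Lemma mt_ones_rec j l n :
  mt (ones (S j)) l n = mt (ones (S j)) (S l) n + (if Nat.ltb (S l) n then mt (ones j) (S l) n / INR (S l) else 0).
Proof. revert n. induction j; intros n.
 - change (ones 1) with (1%Z :: nil). simpl mt.
   transitivity (sm (fun i => if Nat.eqb i (S l) then mzv_term 1 i * 1 else 0) n +
                 sm (fun i => if Nat.ltb (S l) i then mzv_term 1 i * 1 else 0) n).
   + rewrite <- sm_plus. apply sm_ext. intros i _. rewrite ltb_split.
     destruct (Nat.eqb i (S l)) eqn:E. apply Nat.eqb_eq in E; subst.
     replace (Nat.ltb (S l) (S l)) with false by (symmetry; apply Nat.ltb_ge; lia). simpl; lra.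
     simpl. destruct (Nat.ltb (S l) i); lra.
   + rewrite sm_single. rewrite mzv_term_1. change (mt (ones 0) (S l) n) with 1.
     change (mt (ones 1) (S l) n) with (sm (fun i => if Nat.ltb (S l) i then mzv_term 1 i * 1 else 0) n).
     destruct (Nat.ltb (S l) n); unfold Rdiv; ring.
 - change (ones (S (S j))) with (1%Z :: ones (S j)). simpl mt.
   change (match j with 0%nat => nil | S _ => 1%Z :: ones j end) with (ones j).
   rewrite <- (Rmult_1_l (if Nat.ltb (S l) n then _ else 0)).
   transitivity (sm (fun i => if Nat.eqb i (S l) then mzv_term 1 i * mt (ones (S j)) l i else 0) n +
                 sm (fun i => if Nat.ltb (S l) i then mzv_term 1 i * mt (ones (S j)) l i else 0) n).
   + rewrite <- sm_plus. apply sm_ext. intros i _. rewrite ltb_split.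
     destruct (Nat.eqb i (S l)) eqn:E. apply Nat.eqb_eq in E; subst.
     replace (Nat.ltb (S l) (S l)) with false by (symmetry; apply Nat.ltb_ge; lia). simpl; lra.
     simpl. destruct (Nat.ltb (S l) i); lra.
   + rewrite sm_single. rewrite mt_ones_diag, Rmult_0_r. replace (if Nat.ltb (S l) n then 0 else 0) with 0 by (destruct (Nat.ltb (S l) n); auto).
     rewrite Rplus_0_l. 
     transitivity (sm (fun i => if Nat.ltb (S l) i then mzv_term 1 i * mt (ones (S j)) (S l) i else 0) n
        + / INR (S l) * sm (fun i => if Nat.ltb (S l) i then mzv_term 1 i * mt (ones j) (S l) i else 0) n).
     * rewrite <- sm_scal, <- sm_plus. apply sm_ext. intros i _. rewrite IHj.
       destruct (Nat.ltb (S l) i); [field; apply not_0_INR; lia | lra].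
     * destruct (Nat.ltb (S l) n) eqn:E.
       -- replace (mt (ones (S j)) (S l) n) with (sm (fun i => if Nat.ltb (S l) i then mzv_term 1 i * mt (ones j) (S l) i else 0) n) by reflexivity.
          unfold Rdiv. rewrite Rmult_1_l, (Rmult_comm _ (/ INR (S l))). reflexivity.
       -- apply Nat.ltb_ge in E. rewrite Rmult_1_l. 
          replace (sm (fun i => if Nat.ltb (S l) i then mzv_term 1 i * mt (ones j) (S l) i else 0) n) with 0. rewrite Rmult_0_r, !Rplus_0_r. reflexivity.
          transitivity (sm (fun _ => 0) n). symmetry; apply sm_zero. apply sm_ext. intros i Hi.
          replace (Nat.ltb (S l) i) with false by (symmetry; apply Nat.ltb_ge; lia). auto. Qed.


Definition TT (N j l : nat) : R := mt ((-1)%Z :: ones j) l N.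

Lemma mt_cons a s l N : mt (a :: s) l N = sm (fun n => if Nat.ltb l n then mzv_term a n * mt s l n else 0) N.
Proof. reflexivity. Qed.

Lemma T_rec0 N l : TT N 0 l = TT N 0 (S l) + (if Nat.ltb (S l) N then (-1) ^ (S l) / INR (S l) else 0).
Proof. unfold TT. simpl mt.
 transitivity (sm (fun i => if Nat.eqb i (S l) then mzv_term (-1) i * 1 else 0) N +
               sm (fun i => if Nat.ltb (S l) i then mzv_term (-1) i * 1 else 0) N).
 - rewrite <- sm_plus. apply sm_ext. intros i _. rewrite ltb_split.
   destruct (Nat.eqb_spec i (S l)). subst. replace (Nat.ltb (S l) (S l)) with false by (symmetry; apply Nat.ltb_ge; lia). simpl; lra.
   simpl. destruct (Nat.ltb (S l) i); lra.
 - rewrite sm_single, mzv_term_m1. destruct (Nat.ltb (S l) N); lra. Qed.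

Lemma T_recS N j l : TT N (S j) l = TT N (S j) (S l) + TT N j (S l) / INR (S l).
Proof. unfold TT. rewrite (mt_cons _ (ones (S j)) l N), (mt_cons _ (ones (S j)) (S l) N), (mt_cons _ (ones j) (S l) N).
 transitivity (sm (fun i => if Nat.eqb i (S l) then mzv_term (-1) i * mt (ones (S j)) l i else 0) N +
               sm (fun i => if Nat.ltb (S l) i then mzv_term (-1) i * mt (ones (S j)) l i else 0) N).
 - rewrite <- sm_plus. apply sm_ext. intros i _. rewrite ltb_split.
   destruct (Nat.eqb_spec i (S l)). subst. replace (Nat.ltb (S l) (S l)) with false by (symmetry; apply Nat.ltb_ge; lia). simpl; lra.
   simpl. destruct (Nat.ltb (S l) i); lra.
 - rewrite sm_single, mt_ones_diag, Rmult_0_r.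
   replace (if Nat.ltb (S l) N then 0 else 0) with 0 by (destruct (Nat.ltb (S l) N); auto). rewrite Rplus_0_l.
   unfold Rdiv. rewrite Rmult_comm, <- sm_scal, <- sm_plus. apply sm_ext. intros i _.
   rewrite mt_ones_rec. destruct (Nat.ltb (S l) i). field. apply not_0_INR; lia. lra. Qed.

Lemma sm_last f n : sm f (S n) = sm f n + f n.
Proof. reflexivity. Qed.

Definition cf (i : nat) : R := ln 2 ^ i / INR (fact i).

Definition AA (N m l : nat) : R := sm (fun i => cf i * TT N (m - i) l) (S m).

Lemma A_rec N m l : AA N m l = AA N m (S l) + (match m with O => 0 | S m' => AA N m' (S l) / INR (S l) end)
  + cf m * (if Nat.ltb (S l) N then (-1) ^ (S l) / INR (S l) else 0).
Proof. unfold AA. rewrite (sm_last (fun i => cf i * TT N (m - i) l)), (sm_last (fun i => cf i * TT N (m - i) (S l))).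
 rewrite !Nat.sub_diag, T_rec0.
 destruct m.
 - simpl. ring.
 - replace (sm (fun i => cf i * TT N (S m - i) l) (S m)) with
     (sm (fun i => cf i * TT N (S m - i) (S l)) (S m) + sm (fun i => cf i * TT N (m - i) (S l)) (S m) / INR (S l)).
   ring. unfold Rdiv. rewrite Rmult_comm, <- sm_scal, <- sm_plus. apply sm_ext. intros i Hi.
   replace (S m - i)%nat with (S (m - i)) by lia. rewrite (T_recS N (m - i) l). field. apply not_0_INR; lia. Qed.

Definition BB (N m l : nat) : R := (-1) ^ (l + m + 1) * AA N m l - (-1) ^ m * cf (S m).

Lemma neg1_pow l : (-1) ^ l = 1 \/ (-1) ^ l = -1.
Proof. induction l. left; simpl; lra. simpl. destruct IHl as [H|H]; rewrite H; [right|left]; lra. Qed.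

Lemma B_rec N m l : (S l < N)%nat ->
  BB N m l + BB N m (S l) = -2 * (-1) ^ m * cf (S m) +
    (match m with O => 1 / INR (S l) | S m' => BB N m' (S l) / INR (S l) end).
Proof. intros Hl. unfold BB. rewrite A_rec. replace (Nat.ltb (S l) N) with true by (symmetry; apply Nat.ltb_lt; lia).
 assert (HI : INR (S l) <> 0) by (apply not_0_INR; lia).
 destruct m.
 - rewrite !Nat.add_0_r, !pow_add. simpl pow. unfold cf at 1. simpl fact. simpl INR.
   destruct (neg1_pow l) as [H|H]; rewrite H; field; auto.
 - replace (S l + m + 1)%nat with (l + S m + 1)%nat by lia.
   rewrite !pow_add. simpl pow.
   destruct (neg1_pow l) as [H|H]; destruct (neg1_pow m) as [H2|H2]; rewrite H, H2; field; auto. Qed.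

Lemma Lam_S1 m : Lam (S m) 1 = - (-1) ^ m * cf (S m).
Proof. unfold Lam, cf. replace (1 + 1) with 2 by lra. rewrite <- (tech_pow_Rmult (-1) m). unfold Rdiv. ring. Qed.

Definition DD (N m l : nat) : R := BB N m l - QQ m l.

Lemma D_rec N m l : (S l < N)%nat ->
  DD N m l + DD N m (S l) = match m with O => 0 | S m' => DD N m' (S l) / INR (S l) end.
Proof. intros Hl. unfold DD. pose proof (B_rec N m l Hl). pose proof (QQ_rec m l).
 rewrite Lam_S1 in H0. assert (INR (S l) <> 0) by (apply not_0_INR; lia).
 destruct m; simpl Nat.eqb in H0; cbv iota in H0.
 - lra.
 - replace (DD N m (S l)) with (BB N m (S l) - QQ m (S l)) by auto.
   assert (BB N (S m) l + BB N (S m) (S l) - (QQ (S m) (S l) + QQ (S m) l) = (BB N m (S l) - QQ m (S l)) / INR (S l)).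
   { rewrite H, H0. field. auto. }
   unfold DD. lra. Qed.

Fixpoint aa (l : nat) : R := match l with O => 1 | S l' => aa l' * (2 * INR l' + 2) / (2 * INR l' + 1) end.

Lemma aa_ge1 l : 1 <= aa l.
Proof. induction l. simpl; lra. simpl aa. pose proof (pos_INR l).
 assert (1 <= (2 * INR l + 2) / (2 * INR l + 1)) by (apply Rcomplements.Rle_div_r; lra).
 replace (aa l * (2 * INR l + 2) / (2 * INR l + 1)) with (aa l * ((2 * INR l + 2) / (2 * INR l + 1))) by (field; lra). nra. Qed.

Lemma aa_bb l : aa l * bb (S l) = 2 * INR l + 1.
Proof. induction l. simpl; lra. simpl aa. rewrite bb_S by lia. rewrite (S_INR l).
 pose proof (pos_INR l). replace (aa l * (2 * INR l + 2) / (2 * INR l + 1) * (bb (S l) * (2 * (INR l + 1) + 1) / (2 * (INR l + 1))))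
  with (aa l * bb (S l) * (2 * INR l + 3) / (2 * INR l + 1)) by (field; lra). rewrite IHl. field. lra. Qed.

Lemma aa_bb_le l : aa l * bb l <= 2 * INR l + 1.
Proof. rewrite <- aa_bb. pose proof (bb_incr l). pose proof (aa_ge1 l). nra. Qed.

Definition eps (N m : nat) : R := sm (fun i => Rabs (DD N i 0)) (S m).

Lemma eps_mono N m : eps N m <= eps N (S m).
Proof. unfold eps. change (sm ?f (S (S m))) with (sm f (S m) + f (S m)). pose proof (Rabs_pos (DD N (S m) 0)). lra. Qed.

Lemma eps_nonneg N m : 0 <= eps N m.
Proof. apply sm_nonneg. intros; apply Rabs_pos. Qed.

Lemma D_bound N l : (l < N)%nat -> forall m, Rabs (DD N m l) <= 2 ^ (m + 1) * aa l * eps N m.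
Proof. induction l; intros Hl m.
 - simpl aa. unfold eps. change (sm ?f (S m)) with (sm f m + f m).
   assert (0 <= sm (fun i => Rabs (DD N i 0)) m) by (apply sm_nonneg; intros; apply Rabs_pos).
   assert (1 <= 2 ^ (m + 1)) by (apply pow_R1_Rle; lra). pose proof (Rabs_pos (DD N m 0)). nra.
 - specialize (IHl ltac:(lia)). pose proof (pos_INR l).
   assert (Ha : aa l = aa (S l) * (2 * INR l + 1) / (2 * INR l + 2)) by (simpl aa; field; lra).
   induction m.
   + pose proof (D_rec N 0 l Hl). replace (DD N 0 (S l)) with (- DD N 0 l) by lra. rewrite Rabs_Ropp.
     pose proof (IHl 0%nat). pose proof (aa_ge1 (S l)). pose proof (eps_nonneg N 0).
     assert (aa l <= aa (S l)). { rewrite Ha. apply Rcomplements.Rle_div_l. lra. nra. }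
     assert (2 ^ (0 + 1) * aa l * eps N 0 <= 2 ^ (0 + 1) * aa (S l) * eps N 0) by (apply Rmult_le_compat_r; [lra|]; apply Rmult_le_compat_l; [apply pow_le; lra|lra]). lra.
   + pose proof (D_rec N (S m) l Hl). 
     replace (DD N (S m) (S l)) with (- DD N (S m) l + DD N m (S l) / INR (S l)) by lra.
     eapply Rle_trans. apply Rabs_triang. rewrite Rabs_Ropp. unfold Rdiv. rewrite Rabs_mult.
     rewrite (Rabs_inv (INR (S l))), (Rabs_pos_eq (INR (S l))) by (apply pos_INR).
     pose proof (IHl (S m)). pose proof (eps_mono N m). pose proof (eps_nonneg N m).
     assert (0 < INR (S l)) by (apply lt_0_INR; lia).
     assert (Rabs (DD N m (S l)) * / INR (S l) <= 2 ^ (m + 1) * aa (S l) * eps N (S m) * / INR (S l)).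
     { apply Rmult_le_compat_r. apply Rlt_le, Rinv_0_lt_compat; lra.
       eapply Rle_trans. apply IHm. pose proof (aa_ge1 (S l)). pose proof (pow_le 2 (m+1) ltac:(lra)).
       apply Rmult_le_compat_l; nra. }
     assert (2 ^ (S m + 1) * aa l * eps N (S m) + 2 ^ (m + 1) * aa (S l) * eps N (S m) * / INR (S l)
       = 2 ^ (S m + 1) * aa (S l) * eps N (S m)).
     { rewrite Ha, S_INR. replace (S m + 1)%nat with (S (m + 1)) by lia. simpl pow. field. lra. }
     lra. Qed.


Lemma lim_scal u a (l : R) : is_lim_seq u l -> is_lim_seq (fun n => a * u n) (a * l).
Proof. intros H. apply (is_lim_seq_scal_l u a l) in H. simpl in H. exact H. Qed.

Lemma lim_sm (f : nat -> nat -> R) (g : nat -> R) M :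
  (forall j, (j < M)%nat -> is_lim_seq (fun N => f N j) (g j)) ->
  is_lim_seq (fun N => sm (f N) M) (sm g M).
Proof. induction M; intros H; simpl. apply is_lim_seq_const.
 apply is_lim_seq_plus'. apply IHM; intros; apply H; lia. apply H; lia. Qed.

Lemma binom0 n : (1 <= n)%nat -> sm (fun j => cf j * ((-1) ^ (n - j) * cf (n - j))) (S n) = 0.
Proof. intros Hn. pose proof (binomial (ln 2) (- ln 2) n) as Hb.
 replace (ln 2 + - ln 2) with 0 in Hb by ring. rewrite pow_i in Hb by lia.
 rewrite sum_f_R0_sm in Hb.
 assert (INR (fact n) <> 0) by apply INR_fact_neq_0.
 apply (Rmult_eq_reg_l (INR (fact n))); auto. rewrite Rmult_0_r, <- sm_scal, Hb.
 apply sm_ext. intros i Hi. unfold Binomial.C, cf.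
 replace (- ln 2) with (-1 * ln 2) by ring. rewrite Rpow_mult_distr.
 pose proof (INR_fact_neq_0 i). pose proof (INR_fact_neq_0 (n - i)). field. auto. Qed.

Lemma T_0 N j : TT N j 0 = Pj j N 1.
Proof. unfold TT. rewrite mt0, mzv_trunc_cons. unfold Pj. apply sm_ext. intros [|i] _. auto. simpl Nat.eqb. unfold mterm.
 rewrite mzv_term_m1, pow1. fold (e j (S i)). field. apply not_0_INR; lia. Qed.

Lemma D0_lim i : is_lim_seq (fun N => DD N i 0) 0.
Proof. unfold DD. rewrite QQ_0. unfold BB.
 assert (HA : is_lim_seq (fun N => AA N i 0) (sm (fun j => cf j * Lam (S (i - j)) 1) (S i))).
 { unfold AA. apply (lim_sm (fun N j => cf j * TT N (i - j) 0)). intros j _.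
   apply lim_scal. apply (is_lim_seq_ext (fun N => Pj (i - j) N 1)). intros; rewrite T_0; auto. apply Pj_lim. }
 assert (HL : is_lim_seq (fun N => (-1) ^ (0 + i + 1) * AA N i 0 - (-1) ^ i * cf (S i) - 0)
   ((-1) ^ (0 + i + 1) * sm (fun j => cf j * Lam (S (i - j)) 1) (S i) - (-1) ^ i * cf (S i) - 0)).
 { apply is_lim_seq_minus'. apply is_lim_seq_minus'. apply lim_scal; auto. apply is_lim_seq_const. apply is_lim_seq_const. }
 assert (HV : (-1) ^ (0 + i + 1) * sm (fun j => cf j * Lam (S (i - j)) 1) (S i) - (-1) ^ i * cf (S i) - 0 = 0).
 2:{ rewrite HV in HL. exact HL. }
 pose proof (binom0 (S i) ltac:(lia)). rewrite sm_last in H. replace (S i - S i)%nat with O in H by lia.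
 rewrite (sm_ext _ (fun j => cf j * ((-1) ^ (S i - j) * cf (S i - j)))).
 2:{ intros j Hj. rewrite Lam_S1. replace (S i - j)%nat with (S (i - j)) by lia. rewrite <- (tech_pow_Rmult (-1) (i - j)). ring. }
 replace (sm (fun j => cf j * ((-1) ^ (S i - j) * cf (S i - j))) (S i)) with (- (cf (S i) * ((-1) ^ 0 * cf 0))) by lra.
 replace (cf 0) with 1 by (unfold cf; simpl; lra). rewrite !pow_add. rewrite pow_O, pow_1. ring. Qed.

Lemma eps_lim m : is_lim_seq (fun N => eps N m) 0.
Proof. unfold eps. replace 0 with (sm (fun _ => 0) (S m)) by apply sm_zero.
 apply (lim_sm (fun N i => Rabs (DD N i 0))). intros j _.
 apply -> is_lim_seq_abs_0. apply D0_lim. Qed.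


Definition w (k q l : nat) : R := if Nat.eqb l 0 then 0 else e k l / INR l ^ q.

Lemma Y_eq k q N j : (1 <= q)%nat ->
  mzv_trunc ((-1)%Z :: ones j ++ Z.of_nat q :: ones k) N = sm (fun l => w k q l * TT N j l) N.
Proof. intros Hq. change ((-1)%Z :: ones j ++ Z.of_nat q :: ones k) with (((-1)%Z :: ones j) ++ Z.of_nat q :: ones k).
 rewrite mzv_trunc_split. apply sm_ext. intros [|l] _. unfold w; simpl; lra.
 unfold mterm, w, TT. simpl Nat.eqb. rewrite mzv_term_pos by lia. fold (e k (S l)). unfold Rdiv. ring. Qed.

Lemma Zq_eq k q N : (1 <= q)%nat ->
  mzv_trunc ((- Z.of_nat q)%Z :: ones k) N = sm (fun l => (-1) ^ l * w k q l) N.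
Proof. intros Hq. rewrite mzv_trunc_cons. apply sm_ext. intros [|l] _. unfold w; simpl; lra.
 unfold mterm, w. simpl Nat.eqb. rewrite mzv_term_neg by lia. fold (e k (S l)). unfold Rdiv. ring. Qed.

Definition S1 (m k q N : nat) : R := sm (fun l => (-1) ^ l * w k q l * Qn m l N) N.

Lemma exact_B m k q N : (1 <= q)%nat ->
  sm (fun l => (-1) ^ l * w k q l * BB N m l) N =
  (-1) ^ (m + 1) * sm (fun i => cf i * mzv_trunc ((-1)%Z :: ones (m - i) ++ Z.of_nat q :: ones k) N) (S m)
  - (-1) ^ m * cf (S m) * mzv_trunc ((- Z.of_nat q)%Z :: ones k) N.
Proof. intros Hq. rewrite Zq_eq by auto.
 rewrite (sm_ext (fun i => cf i * mzv_trunc _ N) (fun i => sm (fun l => cf i * (w k q l * TT N (m - i) l)) N)).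
 2:{ intros i _. rewrite Y_eq by auto. rewrite sm_scal. auto. }
 rewrite sm_swap.
 rewrite (sm_ext (fun l => (-1) ^ l * w k q l * BB N m l) (fun l => (-1) ^ (m + 1) * sm (fun i => cf i * (w k q l * TT N (m - i) l)) (S m) - (-1) ^ m * cf (S m) * ((-1) ^ l * w k q l))).
 rewrite sm_minus, !sm_scal. reflexivity.
 intros l _. unfold BB, AA.
 replace (sm (fun i => cf i * (w k q l * TT N (m - i) l)) (S m)) with (w k q l * sm (fun i => cf i * TT N (m - i) l) (S m))
   by (rewrite <- sm_scal; apply sm_ext; intros; ring).
 rewrite !pow_add, !pow_1. destruct (neg1_pow l) as [H|H]; rewrite H; ring. Qed.

Lemma sum_g N : sm (fun l => if Nat.eqb l 0 then 0 else bb l / INR l ^ 2) N <= 4.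
Proof. destruct N. simpl; lra.
 assert (forall N, sm (fun l => if Nat.eqb l 0 then 0 else bb l / INR l ^ 2) (S N) <= 4 - cc (S N)).
 { induction N0. simpl. unfold cc. simpl. lra.
   rewrite sm_last. simpl Nat.eqb. cbv iota. pose proof (cc_diff (S N0) ltac:(lia)). lra. }
 pose proof (H N). pose proof (cc_nonneg (S N)). lra. Qed.

Lemma w_nonneg k q l : 0 <= w k q l.
Proof. unfold w. destruct (Nat.eqb_spec l 0). lra. apply Rdiv_le_0_compat. apply e_nonneg. apply pow_lt, lt_0_INR; lia. Qed.

Lemma w_bound k q l : (3 <= q)%nat -> (1 <= l)%nat -> w k q l <= 2 ^ k * bb l / INR l ^ 3.
Proof. intros Hq Hl. unfold w. destruct (Nat.eqb_spec l 0). lia.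
 assert (1 <= INR l) by (apply (le_INR 1); lia).
 assert (INR l ^ 3 <= INR l ^ q) by (apply Rle_pow; auto).
 assert (0 < INR l ^ 3) by (apply pow_lt; lra).
 pose proof (e_bound k l). pose proof (e_nonneg k l). pose proof (bb_ge1 l). pose proof (pow_lt 2 k ltac:(lra)).
 apply Rle_trans with (e k l / INR l ^ 3).
 unfold Rdiv. apply Rmult_le_compat_l. auto. apply Rinv_le_contravar; lra.
 unfold Rdiv. apply Rmult_le_compat_r. apply Rlt_le, Rinv_0_lt_compat; lra. lra. Qed.

Lemma w_aa k q l : (3 <= q)%nat -> w k q l * aa l <= 3 * 2 ^ k * (if Nat.eqb l 0 then 0 else bb l / INR l ^ 2).
Proof. intros Hq. destruct (Nat.eqb_spec l 0). subst. unfold w. simpl. lra.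
 pose proof (w_bound k q l Hq ltac:(lia)). pose proof (aa_ge1 l). pose proof (aa_bb_le l).
 assert (1 <= INR l) by (apply (le_INR 1); lia). pose proof (bb_ge1 l). pose proof (pow_lt 2 k ltac:(lra)).
 apply Rle_trans with (2 ^ k * bb l / INR l ^ 3 * aa l). apply Rmult_le_compat_r; lra.
 replace (2 ^ k * bb l / INR l ^ 3 * aa l) with (2 ^ k * (aa l * bb l) / INR l ^ 3) by (field; lra).
 apply Rle_trans with (2 ^ k * (2 * INR l + 1) / INR l ^ 3).
 unfold Rdiv. apply Rmult_le_compat_r. apply Rlt_le, Rinv_0_lt_compat, pow_lt; lra. apply Rmult_le_compat_l; lra.
 apply Rle_trans with (2 ^ k * (3 * INR l) / INR l ^ 3).
 unfold Rdiv. apply Rmult_le_compat_r. apply Rlt_le, Rinv_0_lt_compat, pow_lt; lra. apply Rmult_le_compat_l; lra.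
 replace (2 ^ k * (3 * INR l) / INR l ^ 3) with (3 * 2 ^ k * (1 / INR l ^ 2)) by (field; lra).
 apply Rmult_le_compat_l. lra. unfold Rdiv. apply Rmult_le_compat_r. apply Rlt_le, Rinv_0_lt_compat, pow_lt; lra. lra. Qed.

Lemma w_l k q l : (3 <= q)%nat -> w k q l * INR l <= 2 ^ k * (if Nat.eqb l 0 then 0 else bb l / INR l ^ 2).
Proof. intros Hq. destruct (Nat.eqb_spec l 0). subst. unfold w. simpl. lra.
 pose proof (w_bound k q l Hq ltac:(lia)).
 assert (1 <= INR l) by (apply (le_INR 1); lia). pose proof (bb_ge1 l). pose proof (pow_lt 2 k ltac:(lra)).
 apply Rle_trans with (2 ^ k * bb l / INR l ^ 3 * INR l). apply Rmult_le_compat_r; lra.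
 right. field. lra. Qed.

Lemma KEY m k q : (3 <= q)%nat -> is_lim_seq (fun N =>
  (-1) ^ (m + 1) * sm (fun i => cf i * mzv_trunc ((-1)%Z :: ones (m - i) ++ Z.of_nat q :: ones k) N) (S m)
  - (-1) ^ m * cf (S m) * mzv_trunc ((- Z.of_nat q)%Z :: ones k) N - S1 m k q N) 0.
Proof. intros Hq.
 apply (is_lim_seq_ext (fun N => sm (fun l => (-1) ^ l * w k q l * DD N m l) N +
                                 sm (fun l => (-1) ^ l * w k q l * (QQ m l - Qn m l N)) N)).
 { intros N. rewrite <- exact_B by lia. unfold S1. rewrite <- !sm_plus, <- sm_minus. apply sm_ext.
   intros l _. unfold DD. ring. }
 apply is_lim_seq_abs_0.
 set (g := fun l : nat => if Nat.eqb l 0 then 0 else bb l / INR l ^ 2).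
 assert (Hg : forall N, 0 <= sm g N <= 4).
 { intros N. split. apply sm_nonneg. intros i _. unfold g. destruct (Nat.eqb_spec i 0). lra.
   apply Rdiv_le_0_compat. pose proof (bb_ge1 i); lra. apply pow_lt, lt_0_INR; lia. apply sum_g. }
 apply (is_lim_seq_le_le (fun _ => 0) _ (fun N => 4 * (2 ^ (m + 1) * eps N m * (3 * 2 ^ k)) + 4 * (2 ^ m * cc N * 2 ^ k))).
 - intros N. split. apply Rabs_pos. eapply Rle_trans. apply Rabs_triang.
   assert (HG : forall N0, (forall l, (l < N0)%nat -> 0 <= g l)).
   { intros N0 l _. unfold g. destruct (Nat.eqb_spec l 0). lra. apply Rdiv_le_0_compat. pose proof (bb_ge1 l); lra. apply pow_lt, lt_0_INR; lia. }
   apply Rplus_le_compat.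
   + eapply Rle_trans. apply sm_abs.
     apply Rle_trans with (sm (fun l => (2 ^ (m + 1) * eps N m * (3 * 2 ^ k)) * g l) N).
     * apply sm_le. intros l Hl. rewrite !Rabs_mult, pow_1_abs, Rmult_1_l, (Rabs_pos_eq (w k q l)) by apply w_nonneg.
       pose proof (D_bound N l Hl m). pose proof (w_aa k q l Hq). pose proof (w_nonneg k q l). change (if Nat.eqb l 0 then 0 else bb l / INR l ^ 2) with (g l) in H0.
       pose proof (eps_nonneg N m). pose proof (pow_le 2 (m+1) ltac:(lra)). pose proof (aa_ge1 l).
       apply Rle_trans with (w k q l * (2 ^ (m + 1) * aa l * eps N m)). apply Rmult_le_compat_l; auto.
       replace (w k q l * (2 ^ (m + 1) * aa l * eps N m)) with (2 ^ (m + 1) * eps N m * (w k q l * aa l)) by ring.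
       replace (2 ^ (m + 1) * eps N m * (3 * 2 ^ k) * g l) with (2 ^ (m + 1) * eps N m * (3 * 2 ^ k * g l)) by ring.
       apply Rmult_le_compat_l; nra.
     * rewrite sm_scal. pose proof (Hg N). pose proof (eps_nonneg N m). pose proof (pow_le 2 (m+1) ltac:(lra)).
       pose proof (pow_le 2 k ltac:(lra)).
       assert (0 <= 2 ^ (m + 1) * eps N m * (3 * 2 ^ k)) by (apply Rmult_le_pos; [apply Rmult_le_pos|]; lra). nra.
   + eapply Rle_trans. apply sm_abs.
     apply Rle_trans with (sm (fun l => (2 ^ m * cc N * 2 ^ k) * g l) N).
     * apply sm_le. intros l Hl. rewrite !Rabs_mult, pow_1_abs, Rmult_1_l, (Rabs_pos_eq (w k q l)) by apply w_nonneg.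
       pose proof (QQ_bound m l N ltac:(lia)). pose proof (w_l k q l Hq). change (if Nat.eqb l 0 then 0 else bb l / INR l ^ 2) with (g l) in H0. pose proof (w_nonneg k q l).
       pose proof (cc_nonneg N). pose proof (pow_le 2 m ltac:(lra)). pose proof (pos_INR l).
       apply Rle_trans with (w k q l * (INR l * 2 ^ m * cc N)). apply Rmult_le_compat_l; auto.
       replace (w k q l * (INR l * 2 ^ m * cc N)) with (2 ^ m * cc N * (w k q l * INR l)) by ring.
       replace (2 ^ m * cc N * 2 ^ k * g l) with (2 ^ m * cc N * (2 ^ k * g l)) by ring.
       apply Rmult_le_compat_l; nra.
     * rewrite sm_scal. pose proof (Hg N). pose proof (cc_nonneg N). pose proof (pow_le 2 m ltac:(lra)).
       pose proof (pow_le 2 k ltac:(lra)).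
       assert (0 <= 2 ^ m * cc N * 2 ^ k) by (apply Rmult_le_pos; [apply Rmult_le_pos|]; lra). nra.
 - apply is_lim_seq_const.
 - replace (Finite 0) with (Finite (4 * (2 ^ (m + 1) * 0 * (3 * 2 ^ k)) + 4 * (2 ^ m * 0 * 2 ^ k))) by (f_equal; ring).
   apply is_lim_seq_plus'; apply lim_scal.
   + apply (is_lim_seq_ext (fun N => eps N m * (2 ^ (m + 1) * (3 * 2 ^ k)))). intros; ring.
     replace (2 ^ (m + 1) * 0 * (3 * 2 ^ k)) with (0 * (2 ^ (m + 1) * (3 * 2 ^ k))) by ring.
     apply is_lim_seq_mult'. apply eps_lim. apply is_lim_seq_const.
   + apply (is_lim_seq_ext (fun N => cc N * (2 ^ m * 2 ^ k))). intros; ring.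
     replace (2 ^ m * 0 * 2 ^ k) with (0 * (2 ^ m * 2 ^ k)) by ring.
     apply is_lim_seq_mult'. apply cc_lim. apply is_lim_seq_const. Qed.


Lemma mzv_lim s : ex_finite_lim_seq (mzv_trunc s) -> is_lim_seq (mzv_trunc s) (mzv s).
Proof. intros [l Hl]. unfold mzv. change (fun N => mzv_trunc s N) with (mzv_trunc s). rewrite (is_lim_seq_unique _ _ Hl). simpl. auto. Qed.

Definition gg (l : nat) : R := if Nat.eqb l 0 then 0 else bb l / INR l ^ 2.

Lemma gg_nonneg l : 0 <= gg l.
Proof. unfold gg. destruct (Nat.eqb_spec l 0). lra. apply Rdiv_le_0_compat. pose proof (bb_ge1 l); lra. apply pow_lt, lt_0_INR; lia. Qed.

Lemma w_bound2 k q l : (2 <= q)%nat -> w k q l <= 2 ^ k * gg l.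
Proof. intros Hq. unfold w, gg. destruct (Nat.eqb_spec l 0). lra.
 assert (1 <= INR l) by (apply (le_INR 1); lia).
 assert (INR l ^ 2 <= INR l ^ q) by (apply Rle_pow; auto).
 assert (0 < INR l ^ 2) by (apply pow_lt; lra).
 pose proof (e_bound k l). pose proof (e_nonneg k l).
 apply Rle_trans with (e k l / INR l ^ 2).
 unfold Rdiv. apply Rmult_le_compat_l. auto. apply Rinv_le_contravar; lra.
 replace (2 ^ k * (bb l / INR l ^ 2)) with (2 ^ k * bb l / INR l ^ 2) by (field; lra).
 unfold Rdiv. apply Rmult_le_compat_r. apply Rlt_le, Rinv_0_lt_compat; lra. lra. Qed.

Lemma Zconv k q : (2 <= q)%nat -> ex_finite_lim_seq (mzv_trunc ((- Z.of_nat q)%Z :: ones k)).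
Proof. intros Hq. destruct (conv_G (mzv_trunc ((- Z.of_nat q)%Z :: ones k)) (2 ^ k)) as [L [HL _]].
 apply pow_le; lra.
 intros n Hn. rewrite !Zq_eq by lia. rewrite sm_last.
 replace (sm (fun l => (-1) ^ l * w k q l) n + (-1) ^ n * w k q n - sm (fun l => (-1) ^ l * w k q l) n) with ((-1) ^ n * w k q n) by ring.
 rewrite Rabs_mult, pow_1_abs, Rmult_1_l, Rabs_pos_eq by apply w_nonneg.
 pose proof (w_bound2 k q n Hq). unfold gg in H. destruct (Nat.eqb_spec n 0). lia. auto.
 exists L; auto. Qed.

Lemma Qn_abs m l N : Rabs (Qn m l N) <= INR l * 2 ^ m * 4.
Proof. unfold Qn. eapply Rle_trans. apply sm_abs.
 apply Rle_trans with (sm (fun n => INR l * 2 ^ m * gg n) N).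
 apply sm_le. intros n _. destruct n. unfold qterm, gg. simpl. rewrite Rabs_R0. lra.
 pose proof (qterm_bound m l (S n) ltac:(lia)). unfold gg. simpl Nat.eqb. cbv iota. auto.
 rewrite sm_scal. pose proof (sum_g N). fold gg in H.
 assert (0 <= INR l * 2 ^ m) by (apply Rmult_le_pos; [apply pos_INR|apply pow_le; lra]). 
 assert (0 <= sm gg N) by (apply sm_nonneg; intros; apply gg_nonneg). nra. Qed.

Lemma S1conv m k q : (3 <= q)%nat -> ex_finite_lim_seq (S1 m k q).
Proof. intros Hq. destruct (conv_G (S1 m k q) (2 ^ m * 2 ^ k * 8)) as [L [HL _]].
 pose proof (pow_le 2 m ltac:(lra)). pose proof (pow_le 2 k ltac:(lra)). nra.
 2:{ exists L; auto. }
 intros n Hn. unfold S1. rewrite sm_last.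
 rewrite (sm_ext (fun l => (-1) ^ l * w k q l * Qn m l (S n)) (fun l => (-1) ^ l * w k q l * Qn m l n + (-1) ^ l * w k q l * qterm m l n)).
 2:{ intros. unfold Qn. rewrite sm_last. ring. }
 rewrite sm_plus.
 replace (sm (fun l => (-1) ^ l * w k q l * Qn m l n) n + sm (fun l => (-1) ^ l * w k q l * qterm m l n) n +
   (-1) ^ n * w k q n * Qn m n (S n) - sm (fun l => (-1) ^ l * w k q l * Qn m l n) n) with
   (sm (fun l => (-1) ^ l * w k q l * qterm m l n) n + (-1) ^ n * w k q n * Qn m n (S n)) by ring.
 eapply Rle_trans. apply Rabs_triang.
 pose proof (pow_le 2 m ltac:(lra)). pose proof (pow_le 2 k ltac:(lra)).
 assert (Hgn : 0 <= bb n / INR n ^ 2) by (apply Rdiv_le_0_compat; [pose proof (bb_ge1 n); lra| apply pow_lt, lt_0_INR; lia]).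
 assert (H1 : Rabs (sm (fun l => (-1) ^ l * w k q l * qterm m l n) n) <= 2 ^ m * 2 ^ k * 4 * (bb n / INR n ^ 2)).
 { eapply Rle_trans. apply sm_abs.
   apply Rle_trans with (sm (fun l => (2 ^ m * (bb n / INR n ^ 2)) * (2 ^ k * gg l)) n).
   apply sm_le. intros l _. rewrite !Rabs_mult, pow_1_abs, Rmult_1_l, Rabs_pos_eq by apply w_nonneg.
   pose proof (qterm_bound m l n Hn). pose proof (w_l k q l Hq) as Hw. fold gg in Hw. pose proof (w_nonneg k q l).
   apply Rle_trans with (w k q l * (INR l * 2 ^ m * (bb n / INR n ^ 2))). apply Rmult_le_compat_l; auto.
   replace (w k q l * (INR l * 2 ^ m * (bb n / INR n ^ 2))) with (2 ^ m * (bb n / INR n ^ 2) * (w k q l * INR l)) by ring.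
   apply Rmult_le_compat_l. apply Rmult_le_pos; lra. auto.
   rewrite sm_scal, sm_scal. pose proof (sum_g n) as Hsg. fold gg in Hsg.
   assert (0 <= sm gg n) by (apply sm_nonneg; intros; apply gg_nonneg).
   assert (0 <= 2 ^ m * (bb n / INR n ^ 2)) by (apply Rmult_le_pos; lra).
   replace (2 ^ m * 2 ^ k * 4 * (bb n / INR n ^ 2)) with (2 ^ m * (bb n / INR n ^ 2) * (2 ^ k * 4)) by ring.
   apply Rmult_le_compat_l; auto. nra. }
 assert (H2 : Rabs ((-1) ^ n * w k q n * Qn m n (S n)) <= 2 ^ m * 2 ^ k * 4 * (bb n / INR n ^ 2)).
 { rewrite !Rabs_mult, pow_1_abs, Rmult_1_l, Rabs_pos_eq by apply w_nonneg.
   pose proof (Qn_abs m n (S n)). pose proof (w_l k q n Hq) as Hw. pose proof (w_nonneg k q n).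
   unfold gg in Hw. destruct (Nat.eqb_spec n 0). lia.
   apply Rle_trans with (w k q n * (INR n * 2 ^ m * 4)). apply Rmult_le_compat_l; auto.
   replace (w k q n * (INR n * 2 ^ m * 4)) with (2 ^ m * 4 * (w k q n * INR n)) by ring.
   replace (2 ^ m * 2 ^ k * 4 * (bb n / INR n ^ 2)) with (2 ^ m * 4 * (2 ^ k * (bb n / INR n ^ 2))) by ring.
   apply Rmult_le_compat_l. lra. auto. }
 lra. Qed.

Lemma ex_lim_sm (f : nat -> nat -> R) M :
  (forall j, (j < M)%nat -> exists y : R, is_lim_seq (fun N => f N j) y) ->
  exists r : R, is_lim_seq (fun N => sm (f N) M) r.
Proof. induction M; intros H. exists 0. apply is_lim_seq_const.
 destruct IHM as [r Hr]. intros; apply H; lia. destruct (H M ltac:(lia)) as [y Hy].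
 exists (r + y). simpl. apply is_lim_seq_plus'; auto. Qed.

Lemma Yconv k q j : (3 <= q)%nat ->
  ex_finite_lim_seq (fun N => mzv_trunc ((-1)%Z :: ones j ++ Z.of_nat q :: ones k) N).
Proof. intros Hq. induction j as [j IH] using lt_wf_ind.
 set (Y := fun N i => mzv_trunc ((-1)%Z :: ones i ++ Z.of_nat q :: ones k) N).
 assert (HK := KEY j k q Hq). destruct (Zconv k q ltac:(lia)) as [z Hz]. destruct (S1conv j k q Hq) as [s Hs].
 assert (HX : exists x : R, is_lim_seq (fun N => (-1) ^ (j + 1) * sm (fun i => cf i * Y N (j - i)%nat) (S j)) x).
 { eexists. apply (is_lim_seq_ext (fun N => ((-1) ^ (j + 1) * sm (fun i => cf i * Y N (j - i)%nat) (S j)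
        - (-1) ^ j * cf (S j) * mzv_trunc ((- Z.of_nat q)%Z :: ones k) N - S1 j k q N)
        + (-1) ^ j * cf (S j) * mzv_trunc ((- Z.of_nat q)%Z :: ones k) N + S1 j k q N)).
   intros; ring. apply is_lim_seq_plus'. apply is_lim_seq_plus'. exact HK. apply lim_scal. exact Hz. exact Hs. }
 destruct HX as [x Hx].
 assert (HR : forall i, (i < j)%nat -> exists y : R, is_lim_seq (fun N => Y N (j - S i)%nat) y).
 { intros i Hi. destruct (IH (j - S i)%nat ltac:(lia)) as [y Hy]. exists y. exact Hy. }
 destruct (ex_lim_sm (fun N i => cf (S i) * Y N (j - S i)%nat) j) as [r Hr].
 { intros i Hi. destruct (HR i Hi) as [y Hy]. exists (cf (S i) * y). apply lim_scal. exact Hy. }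
 exists ((-1) ^ (j + 1) * x - r).
 apply (is_lim_seq_ext (fun N => (-1) ^ (j + 1) * ((-1) ^ (j + 1) * sm (fun i => cf i * Y N (j - i)%nat) (S j)) - sm (fun i => cf (S i) * Y N (j - S i)%nat) j)).
 2:{ apply is_lim_seq_minus'. apply lim_scal. exact Hx. exact Hr. }
 intros N. rewrite sm_shift. replace (j - 0)%nat with j by lia. unfold cf at 1. simpl pow. simpl fact.
 replace ((-1) ^ (j + 1) * ((-1) ^ (j + 1) * (1 / INR 1 * Y N j + sm (fun i => cf (S i) * Y N (j - S i)%nat) j))) with
   (((-1) ^ (j + 1) * (-1) ^ (j + 1)) * (Y N j + sm (fun i => cf (S i) * Y N (j - S i)%nat) j)) by (simpl INR; field).
 rewrite <- pow_add. replace (j + 1 + (j + 1))%nat with (2 * (j + 1))%nat by lia. rewrite pow_1_even. unfold Y. ring.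
Qed.


Lemma pf_poly x y p : (x + y) * sm (fun i => (-1) ^ i * x ^ (p - i) * y ^ i) (S p) = x ^ (p + 1) + (-1) ^ p * y ^ (p + 1).
Proof. induction p. simpl. ring.
 rewrite sm_last. rewrite (sm_ext (fun i => (-1) ^ i * x ^ (S p - i) * y ^ i) (fun i => x * ((-1) ^ i * x ^ (p - i) * y ^ i))).
 2:{ intros i Hi. replace (S p - i)%nat with (S (p - i)) by lia. simpl pow. ring. }
 rewrite sm_scal. replace (S p - S p)%nat with O by lia.
 replace ((x + y) * (x * sm (fun i => (-1) ^ i * x ^ (p - i) * y ^ i) (S p) + (-1) ^ S p * x ^ 0 * y ^ S p))
   with (x * ((x + y) * sm (fun i => (-1) ^ i * x ^ (p - i) * y ^ i) (S p)) + (x + y) * ((-1) ^ S p * y ^ S p)) by (simpl; ring).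
 rewrite IHp. replace (S p + 1)%nat with (S (S p)) by lia. replace (p + 1)%nat with (S p) by lia. simpl. ring. Qed.

Lemma pf_frac x y p : 0 < x -> 0 < y ->
  1 / (y ^ (p + 2) * x * (x + y)) + (-1) ^ p / (x ^ (p + 2) * y * (x + y)) =
  sm (fun i => (-1) ^ i / (x ^ (2 + i) * y ^ (p + 2 - i))) (S p).
Proof. intros Hx Hy.
 assert (Px : 0 < x ^ (p + 2)) by (apply pow_lt; lra). assert (Py : 0 < y ^ (p + 2)) by (apply pow_lt; lra).
 rewrite (sm_ext _ (fun i => / (x ^ (p + 2) * y ^ (p + 2)) * ((-1) ^ i * x ^ (p - i) * y ^ i))).
 2:{ intros i Hi. replace (p + 2)%nat with ((2 + i) + (p - i))%nat at 2 by lia.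
     replace (p + 2)%nat with ((p + 2 - i) + i)%nat at 2 by lia. rewrite (pow_add x (2 + i) (p - i)), (pow_add y (p + 2 - i) i).
     assert (0 < x ^ (2 + i)) by (apply pow_lt; lra). assert (0 < x ^ (p - i)) by (apply pow_lt; lra).
     assert (0 < y ^ (p + 2 - i)) by (apply pow_lt; lra). assert (0 < y ^ i) by (apply pow_lt; lra).
     field. repeat split; lra. }
 rewrite sm_scal.
 apply (Rmult_eq_reg_l (x + y)). 2: lra.
 replace ((x + y) * (/ (x ^ (p + 2) * y ^ (p + 2)) * sm (fun i => (-1) ^ i * x ^ (p - i) * y ^ i) (S p))) with
   (/ (x ^ (p + 2) * y ^ (p + 2)) * ((x + y) * sm (fun i => (-1) ^ i * x ^ (p - i) * y ^ i) (S p))) by ring.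
 rewrite pf_poly. replace (p + 2)%nat with (S (p + 1)) by lia. simpl pow.
 assert (0 < x ^ (p + 1)) by (apply pow_lt; lra). assert (0 < y ^ (p + 1)) by (apply pow_lt; lra).
 field. repeat split; lra. Qed.

Lemma pf_term m k p n l :
  (-1) ^ l * w k (p + 3) l * qterm m l n + (-1) ^ p * ((-1) ^ n * w m (p + 3) n * qterm k n l) =
  sm (fun i => (-1) ^ i * ((-1) ^ n * w m (2 + i) n) * ((-1) ^ l * w k (p + 2 - i) l)) (S p).
Proof. destruct (Nat.eqb_spec n 0) as [Hn|Hn].
 { subst. unfold qterm, w. simpl Nat.eqb. cbv iota. rewrite (sm_ext _ (fun _ => 0)) by (intros; ring). rewrite sm_zero. ring. }
 destruct (Nat.eqb_spec l 0) as [Hl|Hl].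
 { subst. unfold qterm, w. simpl Nat.eqb. cbv iota. rewrite (sm_ext _ (fun _ => 0)) by (intros; ring). rewrite sm_zero. ring. }
 assert (Hx : 0 < INR n) by (apply lt_0_INR; lia). assert (Hy : 0 < INR l) by (apply lt_0_INR; lia).
 unfold qterm, w. replace (Nat.eqb n 0) with false by (symmetry; apply Nat.eqb_neq; auto).
 replace (Nat.eqb l 0) with false by (symmetry; apply Nat.eqb_neq; auto).
 rewrite (sm_ext _ (fun i => ((-1) ^ n * (-1) ^ l * e m n * e k l) * ((-1) ^ i / (INR n ^ (2 + i) * INR l ^ (p + 2 - i))))).
 2:{ intros i Hi. assert (0 < INR n ^ (2 + i)) by (apply pow_lt; lra). assert (0 < INR l ^ (p + 2 - i)) by (apply pow_lt; lra). field. lra. }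
 rewrite sm_scal, <- pf_frac by auto.
 replace (p + 3)%nat with (S (p + 2)) by lia. rewrite <- !tech_pow_Rmult.
 assert (0 < INR n ^ (p + 2)) by (apply pow_lt; lra). assert (0 < INR l ^ (p + 2)) by (apply pow_lt; lra).
 field. repeat split; lra. Qed.

Lemma PF m k p N :
  S1 m k (p + 3) N + (-1) ^ p * S1 k m (p + 3) N =
  sm (fun i => (-1) ^ i * mzv_trunc ((- Z.of_nat (2 + i))%Z :: ones m) N * mzv_trunc ((- Z.of_nat (p + 2 - i))%Z :: ones k) N) (S p).
Proof.
 rewrite (sm_ext _ (fun i => sm (fun n => sm (fun l => (-1) ^ i * ((-1) ^ n * w m (2 + i) n) * ((-1) ^ l * w k (p + 2 - i) l)) N) N)).
 2:{ intros i Hi. rewrite !Zq_eq by lia. rewrite Rmult_assoc, sm_mul_sm, <- sm_scal. apply sm_ext. intros n _.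
     rewrite <- sm_scal. apply sm_ext. intros; ring. }
 rewrite sm_swap. rewrite (sm_ext (fun n => sm (fun i => sm _ N) (S p)) (fun n => sm (fun l => sm (fun i => (-1) ^ i * ((-1) ^ n * w m (2 + i) n) * ((-1) ^ l * w k (p + 2 - i) l)) (S p)) N)).
 2:{ intros n _. apply sm_swap. }
 rewrite sm_swap.
 unfold S1. unfold Qn.
 rewrite (sm_ext (fun l => (-1) ^ l * w k (p + 3) l * sm (qterm m l) N) (fun l => sm (fun n => (-1) ^ l * w k (p + 3) l * qterm m l n) N)).
 2:{ intros; rewrite <- sm_scal; auto. }
 rewrite (sm_ext (fun l => (-1) ^ l * w m (p + 3) l * sm (qterm k l) N) (fun l => sm (fun n => (-1) ^ l * w m (p + 3) l * qterm k l n) N)).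
 2:{ intros; rewrite <- sm_scal; auto. }
 rewrite (sm_swap (fun l n => (-1) ^ l * w m (p + 3) l * qterm k l n)).
 rewrite <- sm_scal, <- sm_plus. apply sm_ext. intros l _. rewrite <- sm_scal, <- sm_plus. apply sm_ext. intros n _.
 apply pf_term. Qed.


Lemma MAIN m k p :
  (-1) ^ (m + 1) * sm (fun i => cf i * mzv ((-1)%Z :: ones (m - i) ++ Z.of_nat (p + 3) :: ones k)) (S m)
  + (-1) ^ (p + k + 1) * sm (fun i => cf i * mzv ((-1)%Z :: ones (k - i) ++ Z.of_nat (p + 3) :: ones m)) (S k)
  = (-1) ^ m * cf (S m) * mzv ((- Z.of_nat (p + 3))%Z :: ones k)
  + (-1) ^ (p + k) * cf (S k) * mzv ((- Z.of_nat (p + 3))%Z :: ones m)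
  + sm (fun i => (-1) ^ i * mzv ((- Z.of_nat (2 + i))%Z :: ones m) * mzv ((- Z.of_nat (p + 2 - i))%Z :: ones k)) (S p).
Proof.
 set (q := (p + 3)%nat). assert (Hq : (3 <= q)%nat) by (unfold q; lia).
 set (F := fun N =>
   (-1) ^ (m + 1) * sm (fun i => cf i * mzv_trunc ((-1)%Z :: ones (m - i) ++ Z.of_nat q :: ones k) N) (S m)
   + (-1) ^ (p + k + 1) * sm (fun i => cf i * mzv_trunc ((-1)%Z :: ones (k - i) ++ Z.of_nat q :: ones m) N) (S k)
   - ((-1) ^ m * cf (S m) * mzv_trunc ((- Z.of_nat q)%Z :: ones k) N
      + (-1) ^ (p + k) * cf (S k) * mzv_trunc ((- Z.of_nat q)%Z :: ones m) N
      + sm (fun i => (-1) ^ i * mzv_trunc ((- Z.of_nat (2 + i))%Z :: ones m) N * mzv_trunc ((- Z.of_nat (p + 2 - i))%Z :: ones k) N) (S p))).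
 assert (H1 : is_lim_seq F (
   (-1) ^ (m + 1) * sm (fun i => cf i * mzv ((-1)%Z :: ones (m - i) ++ Z.of_nat q :: ones k)) (S m)
   + (-1) ^ (p + k + 1) * sm (fun i => cf i * mzv ((-1)%Z :: ones (k - i) ++ Z.of_nat q :: ones m)) (S k)
   - ((-1) ^ m * cf (S m) * mzv ((- Z.of_nat q)%Z :: ones k)
      + (-1) ^ (p + k) * cf (S k) * mzv ((- Z.of_nat q)%Z :: ones m)
      + sm (fun i => (-1) ^ i * mzv ((- Z.of_nat (2 + i))%Z :: ones m) * mzv ((- Z.of_nat (p + 2 - i))%Z :: ones k)) (S p)))).
 { unfold F. apply is_lim_seq_minus'. apply is_lim_seq_plus'.
   - apply lim_scal. apply (lim_sm (fun N i => cf i * mzv_trunc ((-1)%Z :: ones (m - i) ++ Z.of_nat q :: ones k) N)).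
     intros j _. apply lim_scal. apply mzv_lim. apply Yconv; auto.
   - apply lim_scal. apply (lim_sm (fun N i => cf i * mzv_trunc ((-1)%Z :: ones (k - i) ++ Z.of_nat q :: ones m) N)).
     intros j _. apply lim_scal. apply mzv_lim. apply Yconv; auto.
   - apply is_lim_seq_plus'. apply is_lim_seq_plus'.
     + apply lim_scal. apply mzv_lim. apply Zconv; lia.
     + apply lim_scal. apply mzv_lim. apply Zconv; lia.
     + apply (lim_sm (fun N i => (-1) ^ i * mzv_trunc ((- Z.of_nat (2 + i))%Z :: ones m) N * mzv_trunc ((- Z.of_nat (p + 2 - i))%Z :: ones k) N)).
       intros i Hi. apply is_lim_seq_mult'. apply lim_scal. apply mzv_lim. apply Zconv; lia.
       apply mzv_lim. apply Zconv; lia. }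
 assert (H2 : is_lim_seq F 0).
 { apply (is_lim_seq_ext (fun N =>
     ((-1) ^ (m + 1) * sm (fun i => cf i * mzv_trunc ((-1)%Z :: ones (m - i) ++ Z.of_nat q :: ones k) N) (S m)
      - (-1) ^ m * cf (S m) * mzv_trunc ((- Z.of_nat q)%Z :: ones k) N - S1 m k q N)
     + (-1) ^ p * ((-1) ^ (k + 1) * sm (fun i => cf i * mzv_trunc ((-1)%Z :: ones (k - i) ++ Z.of_nat q :: ones m) N) (S k)
      - (-1) ^ k * cf (S k) * mzv_trunc ((- Z.of_nat q)%Z :: ones m) N - S1 k m q N))).
   - intros N. unfold F. rewrite <- (PF m k p N). fold q. rewrite !pow_add. ring.
   - replace 0 with (0 + (-1) ^ p * 0) by ring. apply is_lim_seq_plus'. apply KEY; auto.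
     apply lim_scal. apply KEY; auto. }
 apply is_lim_seq_unique in H1. apply is_lim_seq_unique in H2. rewrite H1 in H2. apply Rbar_finite_eq in H2. lra. Qed.

Theorem theorem4p1 (m k p : nat) :
  (-1) ^ (m + 1) *
    sum_f_R0 (fun i => ln 2 ^ i / INR (fact i) *
       mzv ((-1)%Z :: ones (m - i) ++ (Z.of_nat p + 3)%Z :: ones k)) m
  + (-1) ^ (p + k + 1) *
    sum_f_R0 (fun i => ln 2 ^ i / INR (fact i) *
       mzv ((-1)%Z :: ones (k - i) ++ (Z.of_nat p + 3)%Z :: ones m)) k
  =
  (-1) ^ m / INR (fact (m + 1)) * ln 2 ^ (m + 1) *
     mzv ((- (Z.of_nat p + 3))%Z :: ones k)
  + (-1) ^ (p + k) / INR (fact (k + 1)) * ln 2 ^ (k + 1) *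
     mzv ((- (Z.of_nat p + 3))%Z :: ones m)
  + sum_f_R0 (fun i => (-1) ^ i *
       mzv ((- (2 + Z.of_nat i))%Z :: ones m) *
       mzv ((- (Z.of_nat p + 2 - Z.of_nat i))%Z :: ones k)) p.
Proof.
 pose proof (MAIN m k p) as H.
 replace (Z.of_nat (p + 3)) with (Z.of_nat p + 3)%Z in H by lia.
 rewrite !sum_f_R0_sm.
 rewrite (sm_ext (fun i => (-1) ^ i * mzv ((- (2 + Z.of_nat i))%Z :: ones m) * mzv ((- (Z.of_nat p + 2 - Z.of_nat i))%Z :: ones k))
   (fun i => (-1) ^ i * mzv ((- Z.of_nat (2 + i))%Z :: ones m) * mzv ((- Z.of_nat (p + 2 - i))%Z :: ones k))).
 2:{ intros i Hi. replace (- (2 + Z.of_nat i))%Z with (- Z.of_nat (2 + i))%Z by lia.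
     replace (- (Z.of_nat p + 2 - Z.of_nat i))%Z with (- Z.of_nat (p + 2 - i))%Z by lia. auto. }
 unfold cf in H.
 replace (fact (m + 1)) with (fact (S m)) by (f_equal; lia). replace (ln 2 ^ (m + 1)) with (ln 2 ^ S m) by (f_equal; lia).
 replace (fact (k + 1)) with (fact (S k)) by (f_equal; lia). replace (ln 2 ^ (k + 1)) with (ln 2 ^ S k) by (f_equal; lia).
 rewrite H. unfold Rdiv. ring. Qed.
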